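(* Let $X=(\mathbb{R}^n,\|\cdot\|)$ be a real Banach space with an absolute norm and let $\tilde X=(\mathbb{C}^n,\|\cdot\|_{\mathbb{C}})$ be its complexification, $\|(z_1,\dots,z_n)\|_{\mathbb{C}}=\|(|z_1|,\dots,|z_n|)\|$. Then for $x\in X$, $x$ is an extreme point of $B_X$ if and only if $x$ is an extreme point of $B_{\tilde X}$. Moreover, $X$ is a CL-space if and only if $\tilde X$ is a CL-space.
   Context: A norm on $\mathbb{R}^n$ or $\mathbb{C}^n$ is absolute if $\|(a_1,\dots,a_n)\|=\|(|a_1|,\dots,|a_n|)\|$ for all scalars $a_j$ and $\|e_1\|=\dots=\|e_n\|=1$ for the canonical basis $\{e_j\}$. A point $x\in B_Z$ is an extreme point if $y+z=2x$ with $y,z\in B_Z$ implies $x=y=z$. A real or complex Banach space is a CL-space if its unit ball is the absolutely convex hull of every maximal convex subset of its unit sphere; for finite-dimensional spaces this is equivalent to $|x^*(x)|=1$ for every extreme point $x^*$ of $B_{X^*}$ and every extreme point $x$ of $B_X$. *)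

(* Defs.v *)
From mathcomp Require Import ssreflect ssrfun ssrbool eqtype ssrnat fintype.
From Stdlib Require Import Reals List.
Set Implicit Arguments.
Unset Strict Implicit.
Unset Printing Implicit Defensive.
Open Scope R_scope.

Definition rvec (n : nat) := 'I_n -> R.
Definition rvadd n (x y : rvec n) : rvec n := fun i => x i + y i.
Definition rvscale n (c : R) (x : rvec n) : rvec n := fun i => c * x i.
Definition rvabs n (x : rvec n) : rvec n := fun i => Rabs (x i).
Definition rvunit n (j : 'I_n) : rvec n := fun i => if i == j then 1 else 0.
Definition rvzero n : rvec n := fun _ => 0.

Definition is_norm n (N : rvec n -> R) : Prop :=
  (forall x, 0 <= N x) /\
  (forall x, N x = 0 -> forall i, x i = 0) /\
  (forall c x, N (rvscale c x) = Rabs c * N x) /\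
  (forall x y, N (rvadd x y) <= N x + N y).

Definition is_absolute_norm n (N : rvec n -> R) : Prop :=
  is_norm N /\
  (forall x, N x = N (rvabs x)) /\
  (forall j : 'I_n, N (rvunit j) = 1).

Definition cplx := (R * R)%type.
Definition cadd (z w : cplx) : cplx := (fst z + fst w, snd z + snd w).
Definition cmul (z w : cplx) : cplx :=
  (fst z * fst w - snd z * snd w, fst z * snd w + snd z * fst w).
Definition cabs (z : cplx) : R := sqrt (fst z * fst z + snd z * snd z).
Definition cofR (t : R) : cplx := (t, 0).
Definition c0 : cplx := (0, 0).

Definition cvec (n : nat) := 'I_n -> cplx.
Definition cvadd n (x y : cvec n) : cvec n := fun i => cadd (x i) (y i).
Definition cvscale n (c : cplx) (x : cvec n) : cvec n := fun i => cmul c (x i).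

Definition cnorm n (N : rvec n -> R) (z : cvec n) : R := N (fun i => cabs (z i)).

Definition embed n (x : rvec n) : cvec n := fun i => cofR (x i).

Definition is_extreme_R n (N : rvec n -> R) (x : rvec n) : Prop :=
  N x <= 1 /\
  forall y z : rvec n, N y <= 1 -> N z <= 1 ->
    (forall i, y i + z i = 2 * x i) -> forall i, x i = y i /\ x i = z i.

Definition is_extreme_C n (NC : cvec n -> R) (x : cvec n) : Prop :=
  NC x <= 1 /\
  forall y z : cvec n, NC y <= 1 -> NC z <= 1 ->
    (forall i, cadd (y i) (z i) = cmul (cofR 2) (x i)) ->
    forall i, x i = y i /\ x i = z i.

Definition convex_R n (F : rvec n -> Prop) : Prop :=
  forall x y t, F x -> F y -> 0 <= t <= 1 ->
    F (rvadd (rvscale t x) (rvscale (1 - t) y)).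

Definition max_convex_in_sphere_R n (N : rvec n -> R) (F : rvec n -> Prop) : Prop :=
  (forall x, F x -> N x = 1) /\ convex_R F /\
  forall G : rvec n -> Prop, (forall x, G x -> N x = 1) -> convex_R G ->
    (forall x, F x -> G x) -> forall x, G x -> F x.

Definition rlincomb n (l : list (R * rvec n)) : rvec n :=
  fold_right (fun p acc => rvadd (rvscale (fst p) (snd p)) acc) (@rvzero n) l.

Definition aco_R n (F : rvec n -> Prop) (x : rvec n) : Prop :=
  exists l : list (R * rvec n),
    (forall p, In p l -> F (snd p)) /\
    fold_right (fun p s => Rabs (fst p) + s) 0 l <= 1 /\
    forall i, x i = rlincomb l i.

Definition is_CL_R n (N : rvec n -> R) : Prop :=
  forall F, max_convex_in_sphere_R N F -> forall x, N x <= 1 <-> aco_R F x.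

Definition convex_C n (F : cvec n -> Prop) : Prop :=
  forall x y t, F x -> F y -> 0 <= t <= 1 ->
    F (cvadd (cvscale (cofR t) x) (cvscale (cofR (1 - t)) y)).

Definition max_convex_in_sphere_C n (NC : cvec n -> R) (F : cvec n -> Prop) : Prop :=
  (forall x, F x -> NC x = 1) /\ convex_C F /\
  forall G : cvec n -> Prop, (forall x, G x -> NC x = 1) -> convex_C G ->
    (forall x, F x -> G x) -> forall x, G x -> F x.

Definition clincomb n (l : list (cplx * cvec n)) : cvec n :=
  fold_right (fun p acc => cvadd (cvscale (fst p) (snd p)) acc)
             (fun _ => c0) l.

Definition aco_C n (F : cvec n -> Prop) (x : cvec n) : Prop :=
  exists l : list (cplx * cvec n),
    (forall p, In p l -> F (snd p)) /\
    fold_right (fun p s => cabs (fst p) + s) 0 l <= 1 /\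
    forall i, x i = clincomb l i.

Definition is_CL_C n (NC : cvec n -> R) : Prop :=
  forall F, max_convex_in_sphere_C NC F -> forall x, NC x <= 1 <-> aco_C F x.

(* Main.v *)
From HB Require Import structures.
Require Import Defs.
From mathcomp Require Import ssreflect ssrfun ssrbool eqtype ssrnat seq fintype bigop.
From Stdlib Require Import Reals List Lra Psatz FunctionalExtensionality Classical.
Open Scope R_scope.
Set Implicit Arguments.
Unset Strict Implicit.

Definition upd n (v : rvec n) (j : 'I_n) (c : R) : rvec n :=
  fun i => if i == j then c else v i.

Lemma rvext n (x y : rvec n) : (forall i, x i = y i) -> x = y.
Proof. move=> H. exact: (@functional_extensionality 'I_n R x y H). Qed.

Section Basic.
Variable n : nat.
Variable N : rvec n -> R.
Hypothesis HN : is_absolute_norm N.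

Lemma N_ge0 x : 0 <= N x.
Proof. case: HN => [[H _] _]; exact: H. Qed.
Lemma N_scale c x : N (rvscale c x) = Rabs c * N x.
Proof. case: HN => [[_ [_ [H _]]] _]; exact: H. Qed.
Lemma N_tri x y : N (rvadd x y) <= N x + N y.
Proof. case: HN => [[_ [_ [_ H]]] _]; exact: H. Qed.
Lemma N_abs x : N x = N (rvabs x).
Proof. case: HN => [_ [H _]]; exact: H. Qed.
Lemma N_def x : N x = 0 -> forall i, x i = 0.
Proof. case: HN => [[_ [H _]] _]; exact: H. Qed.

Lemma N_ext x y : (forall i, x i = y i) -> N x = N y.
Proof. move=> H; by rewrite (rvext H). Qed.

Lemma N_zero : N (@rvzero n) = 0.
Proof.
have -> : @rvzero n = rvscale 0 (@rvzero n).
  by apply: rvext => i; rewrite /rvscale /rvzero; ring.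
by rewrite N_scale Rabs_R0 Rmult_0_l.
Qed.

Lemma N_absext x y : (forall i, Rabs (x i) = Rabs (y i)) -> N x = N y.
Proof. move=> H; rewrite (N_abs x) (N_abs y); apply: N_ext => i; exact: H. Qed.

Lemma N_upd_mono v j c : Rabs c <= Rabs (v j) -> N (upd v j c) <= N v.
Proof.
move=> Hc.
set v' := upd v j (- v j).
have Hv' : N v' = N v.
  apply: N_absext => i; rewrite /v' /upd; case E: (i == j) => //.
  move/eqP: E => ->; by rewrite Rabs_Ropp.
case: (Req_dec (v j) 0) => Hvj.
  have -> : upd v j c = v.
    apply: rvext => i; rewrite /upd.
    case E: (i == j) => //. move/eqP: E => ->.
    rewrite Hvj Rabs_R0 in Hc. have: Rabs c = 0 by have := Rabs_pos c; lra.
    move=> H0; rewrite Hvj. move: H0; split_Rabs; lra.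
  lra.
set t := (1 + c / v j) / 2.
have Ht : Rabs (c / v j) <= 1.
  have Hcr : c = (c / v j) * v j by field.
  rewrite Hcr Rabs_mult in Hc.
  have Hp := Rabs_pos_lt _ Hvj.
  apply: (Rmult_le_reg_r (Rabs (v j))) => //. lra.
have Ht2 : 0 <= t <= 1 by move: Ht; rewrite /t; split_Rabs; lra.
have -> : upd v j c = rvadd (rvscale t v) (rvscale (1 - t) v').
  apply: rvext => i; rewrite /upd /rvadd /rvscale /v' /upd.
  case E: (i == j); last by ring.
  move/eqP: E => ->. rewrite /t; field; exact: Hvj.
apply: Rle_trans (N_tri _ _) _.
rewrite !N_scale Hv' !Rabs_pos_eq; lra.
Qed.

Definition mixv (L : list 'I_n) (x y : rvec n) : rvec n :=
  fun i => if i \in L then x i else y i.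

Lemma N_mono x y : (forall i, Rabs (x i) <= Rabs (y i)) -> N x <= N y.
Proof.
move=> H.
have Hm : forall L, N (mixv L x y) <= N y.
  elim=> [|j L IH].
    apply: Req_le; apply: N_ext => i; by rewrite /mixv seq.in_nil.
  apply: Rle_trans IH.
  have -> : mixv (j :: L) x y = upd (mixv L x y) j (x j).
    apply: rvext => i; rewrite /mixv /upd seq.in_cons.
    case E: (i == j) => //=. by move/eqP: E => ->.
  apply: N_upd_mono. rewrite /mixv; case: (j \in L); [lra| exact: H].
have -> : x = mixv (enum 'I_n) x y.
  apply: rvext => i; by rewrite /mixv mem_enum.
exact: Hm.
Qed.

Lemma N_opp x : N (fun i => - x i) = N x.
Proof. apply: N_absext => i; by rewrite Rabs_Ropp. Qed.

End Basic.

Lemma cabs_ge0 z : 0 <= cabs z.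
Proof. exact: sqrt_pos. Qed.

Lemma cabs_cofR t : cabs (cofR t) = Rabs t.
Proof. rewrite /cabs /cofR /=. rewrite Rmult_0_l Rplus_0_r. exact: sqrt_Rsqr_abs. Qed.

Lemma Re_le_cabs z : Rabs (fst z) <= cabs z.
Proof.
rewrite /cabs. rewrite -sqrt_Rsqr_abs. apply: sqrt_le_1_alt.
rewrite /Rsqr. have := Rle_0_sqr (snd z). rewrite /Rsqr. lra.
Qed.

Lemma Im_le_cabs z : Rabs (snd z) <= cabs z.
Proof.
rewrite /cabs. rewrite -sqrt_Rsqr_abs. apply: sqrt_le_1_alt.
rewrite /Rsqr. have := Rle_0_sqr (fst z). rewrite /Rsqr. lra.
Qed.

Lemma cabs_sq z : cabs z * cabs z = fst z * fst z + snd z * snd z.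
Proof. rewrite /cabs sqrt_sqrt //. have := Rle_0_sqr (fst z); have := Rle_0_sqr (snd z); rewrite /Rsqr; lra. Qed.

Lemma cabs_eq_Re z : cabs z = Rabs (fst z) -> snd z = 0.
Proof.
move=> H. have: cabs z * cabs z = Rabs (fst z) * Rabs (fst z) by rewrite H.
rewrite cabs_sq -Rabs_mult Rabs_pos_eq; last exact: Rle_0_sqr.
move=> H2. have: snd z * snd z = 0 by lra. move=> H3.
by case: (Rmult_integral _ _ H3).
Qed.

Section Ext.
Variable n : nat.
Variable N : rvec n -> R.
Hypothesis HN : is_absolute_norm N.

Lemma ext_abs x u : is_extreme_R N x -> N u <= 1 ->
  (forall i, Rabs (x i) <= Rabs (u i)) -> forall i, Rabs (u i) = Rabs (x i).
Proof.
move=> [Hx1 Hx] Hu Hxu.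
pose d i := Rabs (u i) - Rabs (x i).
pose sg i := if Rle_dec 0 (x i) then 1 else -1.
pose e i := if Req_EM_T (x i) 0 then d i else Rmin (d i) (Rabs (x i)).
have Hsg : forall i, sg i * x i = Rabs (x i).
  move=> i; rewrite /sg; case: Rle_dec => h /=; split_Rabs; lra.
have Hsg2 : forall i, sg i * sg i = 1.
  move=> i; rewrite /sg; case: Rle_dec => h /=; lra.
have He0 : forall i, 0 <= e i.
  move=> i; have := Hxu i; have := Rabs_pos (x i); rewrite /e /d.
  case: Req_EM_T => h /=; [lra|]. move=> h1 h2; apply: Rmin_glb; lra.
have Ha : forall i, Rabs (x i + sg i * e i) <= Rabs (u i).
  move=> i. have -> : x i + sg i * e i = sg i * (Rabs (x i) + e i).
    by rewrite -Hsg Rmult_plus_distr_l -Rmult_assoc Hsg2 Rmult_1_l.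
  rewrite Rabs_mult. have -> : Rabs (sg i) = 1 by rewrite /sg; case: Rle_dec => h /=; split_Rabs; lra.
  rewrite Rmult_1_l Rabs_pos_eq; last by have := He0 i; have := Rabs_pos (x i); lra.
  have : e i <= d i. rewrite /e; case: Req_EM_T => h /=; [lra|apply: Rmin_l].
  rewrite /d; lra.
have Hb : forall i, Rabs (x i - sg i * e i) <= Rabs (u i).
  move=> i. have -> : x i - sg i * e i = sg i * (Rabs (x i) - e i).
    by rewrite -Hsg Rmult_minus_distr_l -Rmult_assoc Hsg2 Rmult_1_l.
  rewrite Rabs_mult. have -> : Rabs (sg i) = 1 by rewrite /sg; case: Rle_dec => h /=; split_Rabs; lra.
  rewrite Rmult_1_l. rewrite /e /d; case: Req_EM_T => h /=.
    rewrite h Rabs_R0 Rminus_0_l Rabs_Ropp. rewrite Rabs_pos_eq.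
      have := Rabs_pos (u i); lra.
    have := Hxu i; rewrite h Rabs_R0; lra.
  have := Rmin_r (Rabs (u i) - Rabs (x i)) (Rabs (x i)).
  have := He0 i; rewrite /e /d; case: Req_EM_T => //= _ h0 h1.
  rewrite Rabs_pos_eq; [|lra]. have := Hxu i; lra.
have Hs : forall i, (fun i => x i + sg i * e i) i + (fun i => x i - sg i * e i) i = 2 * x i by move=> i /=; ring.
have H := Hx (fun i => x i + sg i * e i) (fun i => x i - sg i * e i)
  (Rle_trans _ _ _ (N_mono HN Ha) Hu) (Rle_trans _ _ _ (N_mono HN Hb) Hu) Hs.
move=> i.
have [H1 _] := H i.
have Hei : sg i * e i = 0 by lra.
have Hei2 : e i = 0.
  have := Hsg2 i. move=> H2. have: sg i * (sg i * e i) = 0 by rewrite Hei; ring.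
  rewrite -Rmult_assoc H2 Rmult_1_l //.
move: Hei2; rewrite /e /d; case: Req_EM_T => h /=.
  move=> h2; lra.
move=> hm. have hx : 0 < Rabs (x i) by apply: Rabs_pos_lt.
move: hm; rewrite /Rmin; case: Rle_dec => h' /=; lra.
Qed.

End Ext.

Section Part1.
Variable n : nat.
Variable N : rvec n -> R.
Hypothesis HN : is_absolute_norm N.

Lemma cnorm_embed x : cnorm N (embed x) = N x.
Proof.
rewrite /cnorm (N_abs HN x); apply: (N_ext N) => i.
by rewrite /embed cabs_cofR.
Qed.

Lemma N_Re_le (y : cvec n) : N (fun i => fst (y i)) <= cnorm N y.
Proof.
apply: (N_mono HN) => i. rewrite (Rabs_pos_eq (cabs _)); [exact: Re_le_cabs|exact: cabs_ge0].
Qed.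

Lemma part1 x : is_extreme_R N x <-> is_extreme_C (cnorm N) (embed x).
Proof.
split.
- move=> Hx. have [Hx1 Hx2] := Hx. split; first by rewrite cnorm_embed.
  move=> y z Hy Hz Hs.
  have Hs1 : forall i, fst (y i) + fst (z i) = 2 * x i.
    move=> i; move: (Hs i); rewrite /cadd /cmul /cofR /=; case => h1 h2; lra.
  have Hyz := Hx2 _ _ (Rle_trans _ _ _ (N_Re_le y) Hy) (Rle_trans _ _ _ (N_Re_le z) Hz) Hs1.
  have Him : forall w : cvec n, cnorm N w <= 1 -> (forall i, x i = fst (w i)) ->
      forall i, embed x i = w i.
    move=> w Hw Hwx i.
    have Hu := ext_abs HN (u := fun i => cabs (w i)) Hx Hw.
    have H0 : snd (w i) = 0.
      apply: cabs_eq_Re. rewrite -(Rabs_pos_eq (cabs (w i))); last exact: cabs_ge0.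
      rewrite -Hwx. apply: Hu => k. rewrite Hwx (Rabs_pos_eq (cabs _)); [exact: Re_le_cabs|exact: cabs_ge0].
    rewrite /embed /cofR Hwx -H0. by case: (w i).
  move=> i; split; apply: Him => //; move=> k; by case: (Hyz k).
- move=> [Hx1 Hx2]. split; first by rewrite -cnorm_embed.
  move=> y z Hy Hz Hs.
  have := Hx2 (embed y) (embed z).
  rewrite !cnorm_embed. move=> H.
  have := H Hy Hz.
  have Hs' : forall i, cadd (embed y i) (embed z i) = cmul (cofR 2) (embed x i).
    move=> i; rewrite /cadd /cmul /embed /cofR /= -Hs; f_equal; ring.
  move=> H2 i. have [h1 h2] := H2 Hs' i.
  by move: h1 h2; rewrite /embed /cofR; case=> -> [] ->.
Qed.

End Part1.

HB.instance Definition _ := Monoid.isComLaw.Build R 0 Rplus (fun a b c => esym (Rplus_assoc a b c)) Rplus_comm Rplus_0_l.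

Definition gdot (I : finType) (a x : I -> R) := \big[Rplus/0]_(i : I) (a i * x i).
Definition gupd (I : eqType) (v : I -> R) (j : I) (c : R) : I -> R :=
  fun i => if i == j then c else v i.

Lemma gext (I : Type) (x y : I -> R) : (forall i, x i = y i) -> x = y.
Proof. move=> H; exact: functional_extensionality. Qed.

Lemma rsum_eq (I : finType) (F G : I -> R) : (forall i, F i = G i) ->
  \big[Rplus/0]_(i : I) F i = \big[Rplus/0]_(i : I) G i.
Proof. move=> H; apply: eq_bigr => i _; exact: H. Qed.

Lemma rsum_add (I : finType) (F G : I -> R) :
  \big[Rplus/0]_(i : I) (F i + G i) = \big[Rplus/0]_(i : I) F i + \big[Rplus/0]_(i : I) G i.
Proof. exact: big_split. Qed.

Lemma rsum_scale (I : finType) (c : R) (F : I -> R) :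
  \big[Rplus/0]_(i : I) (c * F i) = c * \big[Rplus/0]_(i : I) F i.
Proof.
elim/big_rec2: _ => [|i y1 y2 _ ->]; ring.
Qed.

Lemma rsum0 (I : finType) (F : I -> R) : (forall i, F i = 0) -> \big[Rplus/0]_(i : I) F i = 0.
Proof. move=> H; apply: big1 => i _; exact: H. Qed.

Lemma rsum_le (I : finType) (F G : I -> R) : (forall i, F i <= G i) ->
  \big[Rplus/0]_(i : I) F i <= \big[Rplus/0]_(i : I) G i.
Proof.
move=> H. apply: (big_ind2 (fun a b => a <= b)); [lra| move=> *; lra | move=> i _; exact: H].
Qed.

Lemma rsumD1 (I : finType) (j : I) (F : I -> R) :
  \big[Rplus/0]_(i : I) F i = F j + \big[Rplus/0]_(i : I | i != j) F i.
Proof. by rewrite (bigD1 j). Qed.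

Lemma rsum_le_eq (I : finType) (F G : I -> R) : (forall i, F i <= G i) ->
  \big[Rplus/0]_(i : I) F i = \big[Rplus/0]_(i : I) G i -> forall i, F i = G i.
Proof.
move=> H Heq j. apply: Rle_antisym; first exact: H.
move: Heq; rewrite (rsumD1 j F) (rsumD1 j G).
have : \big[Rplus/0]_(i : I | i != j) F i <= \big[Rplus/0]_(i : I | i != j) G i.
  rewrite big_mkcond [X in _ <= X]big_mkcond /=. apply: rsum_le => i. case: (i != j); [exact: H|lra].
lra.
Qed.

Lemma rsum_single (I : finType) (j : I) (F : I -> R) : (forall i, i != j -> F i = 0) ->
  \big[Rplus/0]_(i : I) F i = F j.
Proof.
move=> H. rewrite (rsumD1 j) big1 ?Rplus_0_r //.
Qed.

Lemma gdot_upd_a (I : finType) (a x : I -> R) j c :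
  gdot (gupd a j c) x = gdot a x + (c - a j) * x j.
Proof.
rewrite /gdot (rsumD1 j) [X in _ = X + _](rsumD1 j) /gupd eqxx.
have -> : \big[Rplus/0]_(i : I | i != j) ((if i == j then c else a i) * x i) =
          \big[Rplus/0]_(i : I | i != j) (a i * x i).
  apply: eq_bigr => i /negbTE -> //.
ring.
Qed.

Lemma gdot_add (I : finType) (a x y : I -> R) :
  gdot a (fun i => x i + y i) = gdot a x + gdot a y.
Proof. rewrite /gdot -rsum_add; apply: rsum_eq => i; ring. Qed.

Lemma gdot_scale (I : finType) (a x : I -> R) t :
  gdot a (fun i => t * x i) = t * gdot a x.
Proof. rewrite /gdot -rsum_scale; apply: rsum_eq => i; ring. Qed.

Lemma gdot_zero (I : finType) (a : I -> R) : gdot a (fun _ => 0) = 0.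
Proof. rewrite /gdot; apply: rsum0 => i; ring. Qed.

Lemma gdot_comm (I : finType) (a x : I -> R) : gdot a x = gdot x a.
Proof. rewrite /gdot; apply: rsum_eq => i; ring. Qed.

Lemma In_mem (T : eqType) (x : T) (s : seq.seq T) : x \in s -> List.In x s.
Proof.
elim: s => [|y s IH] //=. rewrite seq.in_cons => /orP [/eqP ->|H]; [by left|right; exact: IH].
Qed.

Section HB.
Variable I : finType.
Variable q : (I -> R) -> R.
Hypothesis Hsub : forall x y, q (fun i => x i + y i) <= q x + q y.
Hypothesis Hhom : forall t x, 0 < t -> q (fun i => t * x i) = t * q x.
Hypothesis H0 : 0 <= q (fun _ => 0).

Definition inV (L : list I) (x : I -> R) := forall i, ~ List.In i L -> x i = 0.

Lemma HB_step L j a :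
  (forall x, inV L x -> gdot a x <= q x) ->
  exists a', forall x, inV (j :: L) x -> gdot a' x <= q x.
Proof.
move=> Ha.
pose e : I -> R := fun i => if i == j then 1 else 0.
pose Lo := fun r => exists u, inV L u /\ r = gdot a u - q (fun i => u i - e i).
pose Up := fun r => exists u, inV L u /\ r = q (fun i => u i + e i) - gdot a u.
have Hz : inV L (fun _ => 0) by [].
have Hsep : forall r s, Lo r -> Up s -> r <= s.
  move=> r s [u [Hu ->]] [u' [Hu' ->]].
  have Hv : inV L (fun i => u i + u' i) by move=> i Hi; rewrite Hu ?Hu' //; ring.
  have := Ha _ Hv. rewrite gdot_add.
  have := Hsub (fun i => u i - e i) (fun i => u' i + e i).
  have -> : (fun i => (u i - e i) + (u' i + e i)) = (fun i => u i + u' i).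
    apply: gext => i; ring.
  lra.
have Hb : bound Lo.
  exists (q (fun i => 0 + e i) - gdot a (fun _ => 0)). move=> r Hr. apply: Hsep Hr _.
  by exists (fun _ => 0).
have [alpha [Hal1 Hal2]] := completeness Lo Hb (ex_intro _ _ (ex_intro _ (fun _ => 0) (conj Hz erefl))).
have HaUp : forall s, Up s -> alpha <= s.
  move=> s Hs. apply: Hal2 => r Hr. exact: Hsep Hr Hs.
exists (gupd a j alpha) => x Hx.
pose v := gupd x j 0.
have Hv : inV L v.
  move=> i Hi. rewrite /v /gupd. case E: (i == j) => //.
  apply: Hx => /= [[Hij|Hi']]; [by move: E; rewrite Hij eqxx | exact: Hi Hi'].
have Hxv : x = (fun i => v i + x j * e i).
  apply: gext => i; rewrite /v /gupd /e. case E: (i == j); last ring.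
  move/eqP: E => ->; ring.
have Hdv : gdot (gupd a j alpha) x = gdot a v + alpha * x j.
  rewrite gdot_upd_a {1}Hxv gdot_add gdot_scale.
  have -> : gdot a e = a j.
    rewrite /gdot (@rsum_single _ j); first by rewrite /e eqxx; ring.
    move=> i /negbTE Hi; rewrite /e Hi; ring.
  ring.
rewrite Hdv.
case: (Rtotal_order (x j) 0) => [Hneg|[Hzero|Hpos]].
-
  set s := - x j.
  have Hs : 0 < s by rewrite /s; lra.
  pose u := fun i => / s * v i.
  have Hu : inV L u by move=> i Hi; rewrite /u Hv //; ring.
  have := Hal1 (gdot a u - q (fun i => u i - e i)) (ex_intro _ u (conj Hu erefl)).
  have Hq : q (fun i => v i + x j * e i) = s * q (fun i => u i - e i).
    rewrite -Hhom //. f_equal. apply: gext => i. rewrite /u /s. field. lra.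
  have Hg : gdot a v = s * gdot a u.
    rewrite /u gdot_scale. field. lra.
  rewrite -Hxv in Hq. rewrite Hq Hg.
  move=> Hal. have: s * alpha >= s * (gdot a u - q (fun i => u i - e i)).
    apply: Rle_ge. apply: Rmult_le_compat_l; lra.
  rewrite /s. lra.
- rewrite Hzero Rmult_0_r Rplus_0_r.
  have Hvx : v = x.
    apply: gext => i; rewrite /v /gupd; case E: (i == j) => //. by move/eqP: E => ->.
  have := Ha _ Hv; by rewrite Hvx.
- pose u := fun i => / x j * v i.
  have Hu : inV L u by move=> i Hi; rewrite /u Hv //; ring.
  have := HaUp (q (fun i => u i + e i) - gdot a u) (ex_intro _ u (conj Hu erefl)).
  have Hq : q (fun i => v i + x j * e i) = x j * q (fun i => u i + e i).
    rewrite -Hhom //. f_equal. apply: gext => i. rewrite /u. field. lra.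
  have Hg : gdot a v = x j * gdot a u.
    rewrite /u gdot_scale. field. lra.
  rewrite -Hxv in Hq. rewrite Hq Hg.
  move=> Hal. have: x j * alpha <= x j * (q (fun i => u i + e i) - gdot a u).
    apply: Rmult_le_compat_l; lra.
  lra.
Qed.

Lemma HB_main : exists a, forall x, gdot a x <= q x.
Proof.
have : forall L, exists a, forall x, inV L x -> gdot a x <= q x.
  elim=> [|j L [a IH]].
    exists (fun _ => 0) => x Hx.
    have -> : x = (fun _ => 0) by apply: gext => i; apply: Hx.
    by rewrite gdot_zero.
  exact: HB_step IH.
move=> /(_ (enum I)) [a Ha]. exists a => x. apply: Ha => i Hi.
exfalso; apply: Hi. apply: In_mem. by rewrite mem_enum.
Qed.
End HB.

Section FaceHB.
Variable I : finType.
Variable p : (I -> R) -> R.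
Hypothesis Hpt : forall x y, p (fun i => x i + y i) <= p x + p y.
Hypothesis Hph : forall t x, p (fun i => t * x i) = Rabs t * p x.
Variable C : (I -> R) -> Prop.
Hypothesis Hcv : forall x y t, C x -> C y -> 0 <= t <= 1 -> C (fun i => t * x i + (1 - t) * y i).
Hypothesis Hs : forall x, C x -> p x = 1.

Lemma p_zero : p (fun _ => 0) = 0.
Proof.
have := Hph 0 (fun _ => 0). rewrite Rabs_R0 Rmult_0_l. move=> ->; ring.
Qed.

Lemma p_ge0 x : 0 <= p x.
Proof.
have := Hpt x (fun i => -1 * x i). rewrite Hph.
have -> : (fun i => x i + (fun i => -1 * x i) i) = (fun _ => 0) by apply: gext => i; ring.
rewrite p_zero. have -> : Rabs (-1) = 1 by split_Rabs; lra. lra.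
Qed.

Lemma p_opp x : p (fun i => - x i) = p x.
Proof.
have := Hph (-1) x. have -> : Rabs (-1) = 1 by split_Rabs; lra.
have -> : (fun i => -1 * x i) = (fun i => - x i) by apply: gext => i; ring.
lra.
Qed.

Hypothesis c0 : I -> R.
Hypothesis Hc0 : C c0.

Definition Eset (x : I -> R) (r : R) :=
  exists s c, 0 <= s /\ C c /\ r = s - p (fun i => x i + s * c i).

Lemma Eset_le x r : Eset x r -> r <= p x.
Proof.
move=> [s [c [Hs0 [Hc ->]]]].
have := Hpt (fun i => x i + s * c i) (fun i => - x i).
have -> : (fun i => (x i + s * c i) + - x i) = (fun i => s * c i) by apply: gext => i; ring.
rewrite Hph p_opp Hs // Rabs_pos_eq //. lra.
Qed.

Lemma Eset_bound x : bound (Eset x).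
Proof. exists (p x) => r Hr; exact: Eset_le. Qed.

Lemma Eset_ne x : exists r, Eset x r.
Proof. exists (0 - p (fun i => x i + 0 * c0 i)), 0, c0. split; [lra|split=> //]. Qed.

Definition qf x : R := - proj1_sig (completeness (Eset x) (Eset_bound x) (Eset_ne x)).

Lemma qf_le x s c : 0 <= s -> C c -> qf x <= p (fun i => x i + s * c i) - s.
Proof.
move=> H1 H2. rewrite /qf. case: completeness => m [Hm1 Hm2] /=.
have := Hm1 (s - p (fun i => x i + s * c i)). case. by exists s, c. all: move=> h; lra.
Qed.

Lemma qf_ge x b : (forall s c, 0 <= s -> C c -> s - p (fun i => x i + s * c i) <= b) -> - b <= qf x.
Proof.
move=> H. rewrite /qf. case: completeness => m [Hm1 Hm2] /=.
have : m <= b. apply: Hm2 => r [s [c [h1 [h2 ->]]]]. exact: H.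
lra.
Qed.

Lemma qf_le_p x : qf x <= p x.
Proof.
have := qf_le x (Rle_refl 0) Hc0.
have -> : (fun i => x i + 0 * c0 i) = x by apply: gext => i; ring.
lra.
Qed.

Lemma qf_zero : 0 <= qf (fun _ => 0).
Proof.
have := qf_ge (b := 0). rewrite Ropp_0. apply => s c Hs0 Hc.
have -> : (fun i => 0 + s * c i) = (fun i => s * c i) by apply: gext => i; ring.
rewrite Hph Hs // Rabs_pos_eq //. lra.
Qed.

Lemma qf_sub x y : qf (fun i => x i + y i) <= qf x + qf y.
Proof.
have key : forall s c s' c', 0 <= s -> C c -> 0 <= s' -> C c' ->
  (s - p (fun i => x i + s * c i)) + (s' - p (fun i => y i + s' * c' i)) <= - qf (fun i => x i + y i).
  move=> s c s' c' hs hc hs' hc'.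
  case: (Req_dec (s + s') 0) => hss.
    have hs0 : s = 0 by lra. have hs0' : s' = 0 by lra. subst s s'.
    have := qf_le (fun i => x i + y i) (Rle_refl 0) hc.
    have -> : (fun i => x i + y i + 0 * c i) = (fun i => x i + y i) by apply: gext => i; ring.
    have -> : (fun i => x i + 0 * c i) = x by apply: gext => i; ring.
    have -> : (fun i => y i + 0 * c' i) = y by apply: gext => i; ring.
    have := Hpt x y. lra.
  set t := s / (s + s').
  have ht : 0 <= t <= 1.
    rewrite /t; split. apply: Rle_mult_inv_pos => //; lra.
    apply/(Rmult_le_reg_r (s + s')); [lra|]. rewrite /Rdiv Rmult_assoc Rinv_l //; lra.
  have hc'' := Hcv hc hc' ht.
  have := qf_le (fun i => x i + y i) (s := s + s') (Rplus_le_le_0_compat _ _ hs hs') hc''.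
  have -> : (fun i => x i + y i + (s + s') * (t * c i + (1 - t) * c' i)) =
            (fun i => (x i + s * c i) + (y i + s' * c' i)).
    apply: gext => i. rewrite /t. field. exact: hss.
  have := Hpt (fun i => x i + s * c i) (fun i => y i + s' * c' i). lra.
have h1 : forall s' c', 0 <= s' -> C c' ->
    (s' - p (fun i => y i + s' * c' i)) <= qf x - qf (fun i => x i + y i).
  move=> s' c' hs' hc'.
  have := @qf_ge x (- qf (fun i => x i + y i) - (s' - p (fun i => y i + s' * c' i))).
  have H2 : forall s c, 0 <= s -> C c -> s - p (fun i => x i + s * c i) <=
       - qf (fun i => x i + y i) - (s' - p (fun i => y i + s' * c' i)).
    move=> s c hs hc. have := key s c s' c' hs hc hs' hc'. lra.
  move=> H. have := H H2. lra.
have := @qf_ge y (qf x - qf (fun i => x i + y i)).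
move=> H. have := H h1. lra.
Qed.

Lemma qf_hom t x : 0 < t -> qf (fun i => t * x i) = t * qf x.
Proof.
move=> ht. apply: Rle_antisym.
- (* qf(tx) <= t qf x : elements of E_x scaled are elements of E_tx *)
  have : - (- qf (fun i => t * x i) / t) <= qf x.
    apply: qf_ge => s c hs hc.
    have := qf_le (fun i => t * x i) (s := t * s) (Rmult_le_pos _ _ (Rlt_le _ _ ht) hs) hc.
    have -> : (fun i => t * x i + t * s * c i) = (fun i => t * (x i + s * c i)) by apply: gext => i; ring.
    rewrite Hph Rabs_pos_eq; [|lra]. move=> H.
    apply/(Rmult_le_reg_l t) => //. rewrite /Rdiv. field_simplify; [lra|lra].
  move=> H. have : - qf (fun i => t * x i) / t * t >= - qf x * t.
    apply: Rle_ge. apply: Rmult_le_compat_r; lra.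
  rewrite /Rdiv Rmult_assoc Rinv_l; lra.
- have : - (- (t * qf x)) <= qf (fun i => t * x i).
    apply: qf_ge => s c hs hc.
    have := qf_le x (s := s / t) (Rle_mult_inv_pos _ _ hs ht) hc.
    have -> : (fun i => t * x i + s * c i) = (fun i => t * (x i + s / t * c i)).
      apply: gext => i. field. lra.
    rewrite Hph Rabs_pos_eq; [|lra]. move=> H.
    have : t * qf x <= t * (p (fun i => x i + s / t * c i) - s / t).
      apply: Rmult_le_compat_l; lra.
    have -> : t * (p (fun i => x i + s / t * c i) - s / t) = t * p (fun i => x i + s / t * c i) - s.
      field. lra.
    lra.
  lra.
Qed.

Lemma face_HB_ne : exists a, (forall x, gdot a x <= p x) /\ forall x, C x -> gdot a x = 1.
Proof.
have [a Ha] := HB_main qf_sub qf_hom qf_zero.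
exists a; split.
  move=> x; apply: Rle_trans (Ha x) (qf_le_p x).
move=> c Hc. apply: Rle_antisym.
  rewrite -(Hs Hc). apply: Rle_trans (Ha c) (qf_le_p c).
have := Ha (fun i => - c i).
have := qf_le (fun i => - c i) (Rle_0_1) Hc.
have -> : (fun i => - c i + 1 * c i) = (fun _ => 0) by apply: gext => i; ring.
rewrite p_zero.
have -> : (fun i => - c i) = (fun i => -1 * c i) by apply: gext => i; ring.
rewrite gdot_scale. lra.
Qed.

End FaceHB.

Lemma face_HB (I : finType) (p : (I -> R) -> R)
  (Hpt : forall x y, p (fun i => x i + y i) <= p x + p y)
  (Hph : forall t x, p (fun i => t * x i) = Rabs t * p x)
  (C : (I -> R) -> Prop)
  (Hcv : forall x y t, C x -> C y -> 0 <= t <= 1 -> C (fun i => t * x i + (1 - t) * y i))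
  (Hs : forall x, C x -> p x = 1) :
  exists a, (forall x, gdot a x <= p x) /\ forall x, C x -> gdot a x = 1.
Proof.
case: (classic (exists c, C c)) => [[c Hc]|Hne].
  have H := face_HB_ne Hpt Hph Hcv Hs Hc. exact: H.
exists (fun _ => 0); split.
  move=> x. have -> : gdot (fun _ => 0) x = 0.
    rewrite /gdot; apply: rsum0 => i; ring.
  exact: p_ge0 Hpt Hph x.
move=> x Hx; exfalso; apply: Hne; by exists x.
Qed.

Definition term (g z : cplx) := fst g * fst z + snd g * snd z.
Definition cconj (z : cplx) : cplx := (fst z, - snd z).

Lemma cpair_eq (z w : cplx) : fst z = fst w -> snd z = snd w -> z = w.
Proof. by case: z; case: w => /= ? ? ? ? -> ->. Qed.

Lemma cabs_sq2 z : Rsqr (cabs z) = fst z * fst z + snd z * snd z.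
Proof. rewrite /Rsqr; exact: cabs_sq. Qed.

Lemma sq_le_le a b : 0 <= b -> a * a <= b * b -> a <= b.
Proof. move=> H1 H2. nra. Qed.

Lemma term_le g z : term g z <= cabs g * cabs z.
Proof.
apply: sq_le_le. apply: Rmult_le_pos; exact: cabs_ge0.
have -> : cabs g * cabs z * (cabs g * cabs z) = (cabs g * cabs g) * (cabs z * cabs z) by ring.
rewrite !cabs_sq /term. have := Rle_0_sqr (fst g * snd z - snd g * fst z); rewrite /Rsqr; nra.
Qed.

Lemma cabs_opp z : cabs (- fst z, - snd z) = cabs z.
Proof. by rewrite /cabs /=; f_equal; ring. Qed.

Lemma term_abs_le g z : Rabs (term g z) <= cabs g * cabs z.
Proof.
have H1 := term_le g z.
have H2 := term_le g (- fst z, - snd z).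
rewrite cabs_opp in H2.
move: H2; rewrite /term /=. move: H1; rewrite /term. split_Rabs; lra.
Qed.

Lemma cabs_mul u v : cabs (cmul u v) = cabs u * cabs v.
Proof.
rewrite /cabs -sqrt_mult; try (nra). f_equal. rewrite /cmul /=. ring.
Qed.

Lemma cabs_add u v : cabs (cadd u v) <= cabs u + cabs v.
Proof.
apply: sq_le_le. have := cabs_ge0 u; have := cabs_ge0 v; lra.
have H := term_le u v. move: H.
rewrite cabs_sq /cadd /term /=.
have := cabs_sq u; have := cabs_sq v. nra.
Qed.


Lemma cabs0 z : cabs z = 0 -> z = c0.
Proof.
move=> H. have := cabs_sq z. rewrite H Rmult_0_l => H2.
apply: cpair_eq => /=; nra.
Qed.

Lemma cabs_c0 : cabs c0 = 0.
Proof. rewrite /cabs /c0 /=. rewrite Rmult_0_l Rplus_0_l. exact: sqrt_0. Qed.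

Definition ph (g : cplx) : cplx :=
  if Req_EM_T (cabs g) 0 then (1, 0) else (fst g / cabs g, snd g / cabs g).

Lemma cabs_ph g : cabs (ph g) = 1.
Proof.
rewrite /ph; case: Req_EM_T => h /=.
  rewrite /cabs /=. have -> : 1 * 1 + 0 * 0 = 1 by ring. exact: sqrt_1.
have hp : 0 < cabs g by have := cabs_ge0 g; lra.
rewrite /cabs /=. have -> : fst g / cabs g * (fst g / cabs g) + snd g / cabs g * (snd g / cabs g) = 1.
  have := cabs_sq g. move=> H.
  transitivity ((fst g * fst g + snd g * snd g) * / (cabs g * cabs g)); first by field; lra.
  rewrite -H; field; lra.
exact: sqrt_1.
Qed.

Lemma ph_sq g : fst (ph g) * fst (ph g) + snd (ph g) * snd (ph g) = 1.
Proof. rewrite -cabs_sq cabs_ph; ring. Qed.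

Lemma ph_decomp g : g = cmul (ph g) (cofR (cabs g)).
Proof.
rewrite /ph; case: Req_EM_T => h /=.
  rewrite h (cabs0 h) /cmul /cofR /c0 /=. apply: cpair_eq => /=; ring.
apply: cpair_eq; rewrite /cmul /cofR /=; field; exact: h.
Qed.

Lemma term_ph g w : term g (cmul (ph g) w) = cabs g * fst w.
Proof.
rewrite {1}(ph_decomp g). rewrite /term /cmul /cofR /=.
have := ph_sq g. move=> H.
transitivity (cabs g * fst w * (fst (ph g) * fst (ph g) + snd (ph g) * snd (ph g))); first ring.
rewrite H; ring.
Qed.

Lemma unit_term (u w : cplx) : cabs u = 1 -> term u (cmul u w) = fst w.
Proof.
move=> H. have := cabs_sq u. rewrite H /term /cmul /= => H2.
transitivity (fst w * (fst u * fst u + snd u * snd u)); first ring.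
rewrite -H2; ring.
Qed.

Lemma term_scale (u : cplx) b z : term (cmul u (cofR b)) z = b * term u z.
Proof. rewrite /term /cmul /cofR /=; ring. Qed.

Lemma cabs_unit_mul u w : cabs u = 1 -> cabs (cmul u w) = cabs w.
Proof. move=> H; rewrite cabs_mul H; ring. Qed.

Lemma cconj_unit u : cabs u = 1 -> cmul (cconj u) u = (1, 0).
Proof.
move=> H. have := cabs_sq u. rewrite H => H2.
apply: cpair_eq; rewrite /cmul /cconj /=; lra.
Qed.

Lemma cabs_conj u : cabs (cconj u) = cabs u.
Proof. by rewrite /cabs /cconj /=; f_equal; ring. Qed.

Lemma cmulA u v w : cmul u (cmul v w) = cmul (cmul u v) w.
Proof. apply: cpair_eq; rewrite /cmul /=; ring. Qed.
Lemma cmulC u v : cmul u v = cmul v u.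
Proof. apply: cpair_eq; rewrite /cmul /=; ring. Qed.
Lemma cmul1 u : cmul (1, 0) u = u.
Proof. apply: cpair_eq; rewrite /cmul /=; ring. Qed.

Lemma term_eq g z : term g z = cabs g * cabs z -> cabs g <> 0 ->
  z = cmul (ph g) (cofR (cabs z)).
Proof.
move=> H hg.
have hz := cabs_sq z. have hgg := cabs_sq g.
have cr : (fst g * snd z - snd g * fst z) * (fst g * snd z - snd g * fst z) = 0.
  have: term g z * term g z = (cabs g * cabs g) * (cabs z * cabs z) by rewrite H; ring.
  rewrite hz hgg /term. nra.
have cr0 : fst g * snd z = snd g * fst z by nra.
have H' : fst g * fst z + snd g * snd z = cabs g * cabs z by rewrite -H.
have e1 : cabs g * cabs g * fst z = cabs g * (fst g * cabs z).
  rewrite hgg.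
  transitivity (fst g * (fst g * fst z + snd g * snd z) + snd g * (snd g * fst z - fst g * snd z)); first ring.
  rewrite cr0 H'; ring.
have e2 : cabs g * cabs g * snd z = cabs g * (snd g * cabs z).
  rewrite hgg.
  transitivity (snd g * (fst g * fst z + snd g * snd z) + fst g * (fst g * snd z - snd g * fst z)); first ring.
  rewrite cr0 H'; ring.
rewrite Rmult_assoc in e1. rewrite Rmult_assoc in e2.
have e1' := Rmult_eq_reg_l _ _ _ e1 hg.
have e2' := Rmult_eq_reg_l _ _ _ e2 hg.
rewrite /ph; destruct (Req_EM_T (cabs g) 0) as [hh|hh]; [by []|simpl].
apply: cpair_eq; rewrite /cmul /cofR /=.
- have -> : fst z = (cabs g * fst z) / cabs g by field.
  rewrite e1'. field. exact: hg.
- have -> : snd z = (cabs g * snd z) / cabs g by field.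
  rewrite e2'. field. exact: hg.
Qed.

Definition asum n (l : list (R * rvec n)) := fold_right (fun p s => Rabs (fst p) + s) 0 l.

Lemma rlc_nil n i : rlincomb (@nil (R * rvec n)) i = 0.
Proof. by []. Qed.
Lemma rlc_cons n (p : R * rvec n) l i : rlincomb (p :: l) i = fst p * snd p i + rlincomb l i.
Proof. by []. Qed.

Lemma rlc_app n (l1 l2 : list (R * rvec n)) i :
  rlincomb (l1 ++ l2) i = rlincomb l1 i + rlincomb l2 i.
Proof. elim: l1 => [|p l IH] /=; [rewrite /rvzero; ring| rewrite /rvadd /rvscale -/(rlincomb _) IH; ring]. Qed.

Lemma rlc_scale n c (l : list (R * rvec n)) i :
  rlincomb (map (fun p => (c * fst p, snd p)) l) i = c * rlincomb l i.
Proof. elim: l => [|p l IH] /=; [rewrite /rvzero; ring| rewrite /rvadd /rvscale -/(rlincomb _) IH /=; ring]. Qed.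

Lemma asum_app n (l1 l2 : list (R * rvec n)) : asum (l1 ++ l2) = asum l1 + asum l2.
Proof. elim: l1 => [|p l IH] /=; [ring| rewrite IH; ring]. Qed.

Lemma asum_scale n c (l : list (R * rvec n)) :
  asum (map (fun p => (c * fst p, snd p)) l) = Rabs c * asum l.
Proof. elim: l => [|p l IH] /=; [ring| rewrite IH Rabs_mult; ring]. Qed.

Lemma asum_ge0 n (l : list (R * rvec n)) : 0 <= asum l.
Proof. elim: l => [|p l IH] /=; [lra| have := Rabs_pos (fst p); lra]. Qed.

Lemma aco_mono n (P Q : rvec n -> Prop) x : (forall y, P y -> Q y) -> aco_R P x -> aco_R Q x.
Proof.
move=> H [l [H1 [H2 H3]]]. exists l; split=> //. move=> p Hp; apply: H; exact: H1.
Qed.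

Lemma aco_list n (P : rvec n -> Prop) (l : list (R * rvec n)) :
  (forall p, In p l -> aco_R P (snd p)) ->
  exists l', (forall p, In p l' -> P (snd p)) /\ asum l' <= asum l /\
     forall i, rlincomb l i = rlincomb l' i.
Proof.
elim: l => [|[c y] l IH] H.
  exists nil; split=> //; split=> //=; lra.
have [l' [H1 [H2 H3]]] := IH (fun p Hp => H p (or_intror Hp)).
have [m [Hm1 [Hm2 Hm3]]] := H (c, y) (or_introl erefl).
change (asum m <= 1) in Hm2.
exists (map (fun p => (c * fst p, snd p)) m ++ l'); split.
  move=> p Hp; case: (in_app_or _ _ _ Hp) => Hq; last exact: H1.
  case: (proj1 (in_map_iff _ _ _) Hq) => q [<- Hq'] /=; exact: (Hm1 _ Hq').
split.
  rewrite asum_app asum_scale /=. have := Rmult_le_compat_l _ _ _ (Rabs_pos c) Hm2. lra.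
move=> i. rewrite rlc_app rlc_scale /= -H3 /rvadd /rvscale /= -Hm3. by [].
Qed.

Lemma aco_trans n (P : rvec n -> Prop) x : aco_R (aco_R P) x -> aco_R P x.
Proof.
move=> [l [H1 [H2 H3]]]. change (asum l <= 1) in H2. have [l' [H1' [H2' H3']]] := aco_list H1.
exists l'; split=> //; split; [change (asum l' <= 1); lra| move=> i; rewrite H3 H3' //].
Qed.

Lemma aco_self n (P : rvec n -> Prop) x : P x -> aco_R P x.
Proof.
move=> H. exists ((1, x) :: nil); split; first by move=> p [<-|[]].
split; first by rewrite /= Rabs_R1; lra.
move=> i; rewrite /= /rvadd /rvscale /rvzero /=; ring.
Qed.

Section Real.
Variable n : nat.
Variable N : rvec n -> R.
Hypothesis HN : is_absolute_norm N.

Definition dot (a x : rvec n) := gdot a x.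
Definition dominated (a : rvec n) := forall x, dot a x <= N x.
Definition Fa (a x : rvec n) := N x = 1 /\ dot a x = 1.

Lemma dot_rlc a (l : list (R * rvec n)) :
  dot a (rlincomb l) = fold_right (fun p s => fst p * dot a (snd p) + s) 0 l.
Proof.
elim: l => [|p l IH] /=.
  rewrite /dot /rvzero; exact: gdot_zero.
rewrite -IH /dot /rvadd /rvscale. rewrite (gdot_add a (fun i => fst p * snd p i)) gdot_scale //.
Qed.

Lemma N_rlc (l : list (R * rvec n)) : N (rlincomb l) <= fold_right (fun p s => Rabs (fst p) * N (snd p) + s) 0 l.
Proof.
elim: l => [|p l IH] /=.
  rewrite N_zero //; lra.
apply: Rle_trans (N_tri HN _ _) _. rewrite N_scale //. lra.
Qed.

Lemma aco_ball (F : rvec n -> Prop) x : (forall y, F y -> N y = 1) -> aco_R F x -> N x <= 1.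
Proof.
move=> HF [l [H1 [H2 H3]]].
have -> : x = rlincomb l by apply: rvext.
apply: Rle_trans (N_rlc l) _. apply: Rle_trans _ H2.
elim: l H1 {H3} => [|p l IH] H1 /=; first lra.
rewrite HF; last by apply: H1; left.
have := IH (fun q Hq => H1 q (or_intror Hq)). lra.
Qed.

Lemma Fa_convex a : dominated a -> convex_R (Fa a) /\ (forall x, Fa a x -> N x = 1).
Proof.
move=> Hd; split; last by move=> x [].
move=> x y t [hx1 hx2] [hy1 hy2] ht.
have hdot : dot a (rvadd (rvscale t x) (rvscale (1 - t) y)) = 1.
  rewrite /dot /rvadd /rvscale (gdot_add a (fun i => t * x i)) !gdot_scale -/(dot a x) -/(dot a y) hx2 hy2; ring.
split=> //. apply: Rle_antisym.
  apply: Rle_trans (N_tri HN _ _) _. rewrite !N_scale // hx1 hy1 !Rabs_pos_eq; lra.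
have := Hd (rvadd (rvscale t x) (rvscale (1 - t) y)); rewrite hdot; lra.
Qed.

Lemma real_face_repr (C : rvec n -> Prop) : convex_R C -> (forall x, C x -> N x = 1) ->
  exists a, dominated a /\ forall x, C x -> Fa a x.
Proof.
move=> Hc Hs.
have Hpt : forall x y : rvec n, N (fun i => x i + y i) <= N x + N y by move=> x y; exact: (N_tri HN).
have Hph : forall t (x : rvec n), N (fun i => t * x i) = Rabs t * N x by move=> t x; exact: (N_scale HN).
have [a [Ha1 Ha2]] := face_HB Hpt Hph Hc Hs.
exists a; split; first exact: Ha1.
move=> x Hx; split; [exact: Hs| exact: Ha2].
Qed.

Lemma max_repr F : max_convex_in_sphere_R N F -> exists a, dominated a /\ forall x, F x <-> Fa a x.
Proof.
move=> [Hs [Hc Hm]].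
have [a [Hd Ha]] := real_face_repr Hc Hs.
exists a; split=> // x; split; first exact: Ha.
have [Hc' Hs'] := Fa_convex Hd.
exact: Hm (Fa a) Hs' Hc' Ha x.
Qed.

Lemma dot_abs_ge a x : (forall i, 0 <= a i) -> dot a x <= dot a (rvabs x).
Proof. move=> H; apply: rsum_le => i; rewrite /rvabs. have := H i; have := Rle_abs (x i); nra. Qed.

Lemma Fa_term a x : dominated a -> (forall i, 0 <= a i) -> Fa a x -> forall i, a i * x i = a i * Rabs (x i).
Proof.
move=> Hd Hp [h1 h2].
apply: rsum_le_eq.
  move=> i; have := Hp i; have := Rle_abs (x i); nra.
apply: Rle_antisym; first by apply: rsum_le => i; have := Hp i; have := Rle_abs (x i); nra.
have := Hd (rvabs x). rewrite -(N_abs HN) h1. rewrite /dot /gdot /rvabs in h2 *. lra.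
Qed.

Lemma Fa_abs a x : dominated a -> (forall i, 0 <= a i) -> Fa a x -> Fa a (rvabs x).
Proof.
move=> Hd Hp H. have Ht := Fa_term Hd Hp H. case: H => h1 h2. split; first by rewrite -(N_abs HN).
rewrite -h2. apply: rsum_eq => i. rewrite /rvabs Ht //.
Qed.

Lemma dot_upd_x a x j c : dot a (upd x j c) = dot a x + a j * (c - x j).
Proof.
rewrite /dot gdot_comm. have -> : upd x j c = gupd x j c by [].
rewrite gdot_upd_a gdot_comm; ring.
Qed.

Lemma dot_upd_a a x j c : dot (upd a j c) x = dot a x + (c - a j) * x j.
Proof. rewrite /dot. have -> : upd a j c = gupd a j c by []. by rewrite gdot_upd_a. Qed.

Lemma Fa_flip a x j : a j = 0 -> Fa a x -> Fa a (upd x j (- x j)).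
Proof.
move=> Hj [h1 h2]. split.
  rewrite -h1; apply: (N_absext HN) => i; rewrite /upd; case E: (i == j) => //.
  by move/eqP: E => ->; rewrite Rabs_Ropp.
rewrite dot_upd_x Hj; lra.
Qed.

Definition sflip (s x : rvec n) : rvec n := fun i => s i * x i.
Definition is_sign (s : rvec n) := forall i, s i = 1 \/ s i = -1.

Lemma sflipK s x : is_sign s -> sflip s (sflip s x) = x.
Proof. move=> H; apply: rvext => i; rewrite /sflip. case: (H i) => ->; ring. Qed.

Lemma N_sflip s x : is_sign s -> N (sflip s x) = N x.
Proof.
move=> H; apply: (N_absext HN) => i; rewrite /sflip Rabs_mult. case: (H i) => ->.
  rewrite Rabs_R1; ring.
rewrite Rabs_Ropp Rabs_R1; ring.
Qed.

Lemma dot_sflip s a x : dot a (sflip s x) = dot (sflip s a) x.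
Proof. rewrite /dot /gdot; apply: rsum_eq => i; rewrite /sflip; ring. Qed.

Lemma Fa_sflip s a x : is_sign s -> (Fa (sflip s a) x <-> Fa a (sflip s x)).
Proof. move=> Hs. by rewrite /Fa dot_sflip (N_sflip x Hs). Qed.

Lemma sflip_lin s t u x y : sflip s (rvadd (rvscale t x) (rvscale u y)) =
  rvadd (rvscale t (sflip s x)) (rvscale u (sflip s y)).
Proof. apply: rvext => i; rewrite /sflip /rvadd /rvscale; ring. Qed.

Lemma max_sflip s F : is_sign s -> max_convex_in_sphere_R N F ->
  max_convex_in_sphere_R N (fun x => F (sflip s x)).
Proof.
move=> Hs [H1 [H2 H3]]. split.
  move=> x Hx. rewrite -(N_sflip x Hs). exact: H1.
split.
  move=> x y t hx hy ht. rewrite sflip_lin. exact: H2.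
move=> G HG1 HG2 HG3 x Hx.
apply: (H3 (fun y => G (sflip s y))).
- move=> y Hy. rewrite -(N_sflip y Hs). exact: HG1.
- move=> y z t hy hz ht. rewrite sflip_lin. exact: HG2.
- move=> y Hy. apply: HG3. by rewrite sflipK.
- by rewrite sflipK.
Qed.

Lemma asum_map_snd (f : rvec n -> rvec n) (l : list (R * rvec n)) :
  asum (map (fun p => (fst p, f (snd p))) l) = asum l.
Proof. elim: l => [|p l IH] //=. by rewrite IH. Qed.

Lemma rlc_sflip s (l : list (R * rvec n)) i :
  rlincomb (map (fun p => (fst p, sflip s (snd p))) l) i = s i * rlincomb l i.
Proof.
elim: l => [|p l IH] /=; first by rewrite /rvzero; ring.
rewrite /rvadd /rvscale /sflip -/(rlincomb _) IH /=; ring.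
Qed.

Lemma aco_sflip s F x : is_sign s -> aco_R F (sflip s x) -> aco_R (fun y => F (sflip s y)) x.
Proof.
move=> Hs [l [H1 [H2 H3]]].
exists (map (fun p => (fst p, sflip s (snd p))) l); split.
  move=> p Hp; case: (proj1 (in_map_iff _ _ _) Hp) => q [<- Hq] /=. rewrite sflipK //. exact: H1.
split.
  change (asum (map (fun p => (fst p, sflip s (snd p))) l) <= 1). by rewrite asum_map_snd.
move=> i. rewrite rlc_sflip -H3 /sflip. case: (Hs i) => ->; ring.
Qed.

Lemma CLface_sflip s F : is_sign s -> (forall x, N x <= 1 -> aco_R F x) ->
  forall x, N x <= 1 -> aco_R (fun y => F (sflip s y)) x.
Proof.
move=> Hs H x Hx. apply: aco_sflip => //. apply: H. by rewrite N_sflip.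
Qed.



End Real.

Lemma cvext n (x y : cvec n) : (forall i, x i = y i) -> x = y.
Proof. move=> H. exact: (@functional_extensionality 'I_n cplx x y H). Qed.

Definition casum n (l : list (cplx * cvec n)) := fold_right (fun p s => cabs (fst p) + s) 0 l.

Lemma clc_cons n (p : cplx * cvec n) l i : clincomb (p :: l) i = cadd (cmul (fst p) (snd p i)) (clincomb l i).
Proof. by []. Qed.

Section Cplx.
Variable n : nat.
Variable N : rvec n -> R.
Hypothesis HN : is_absolute_norm N.

Definition cdot (g z : cvec n) := \big[Rplus/0]_(i : 'I_n) term (g i) (z i).
Definition cdominated (g : cvec n) := forall z, cdot g z <= cnorm N z.
Definition CF (g z : cvec n) := cnorm N z = 1 /\ cdot g z = 1.

Lemma cnorm_mono z w : (forall i, cabs (z i) <= cabs (w i)) -> cnorm N z <= cnorm N w.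
Proof.
move=> H; apply: (N_mono HN) => i. rewrite !Rabs_pos_eq; [exact: H|exact: cabs_ge0|exact: cabs_ge0].
Qed.

Lemma cnorm_ge0 z : 0 <= cnorm N z.
Proof. exact: (N_ge0 HN). Qed.

Lemma cnorm_tri z w : cnorm N (cvadd z w) <= cnorm N z + cnorm N w.
Proof.
apply: Rle_trans (N_tri HN (fun i => cabs (z i)) (fun i => cabs (w i))).
apply: (N_mono HN) => i. rewrite /rvadd /cvadd.
have := cabs_add (z i) (w i). have := cabs_ge0 (cadd (z i) (w i)). have := cabs_ge0 (z i). have := cabs_ge0 (w i).
split_Rabs; lra.
Qed.

Lemma cnorm_scale c z : cnorm N (cvscale c z) = cabs c * cnorm N z.
Proof.
rewrite /cnorm -{1}(Rabs_pos_eq (cabs c) (cabs_ge0 c)) -(N_scale HN). apply: (N_ext N) => i. by rewrite /rvscale /cvscale cabs_mul.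
Qed.

Lemma cnorm_absext z w : (forall i, cabs (z i) = cabs (w i)) -> cnorm N z = cnorm N w.
Proof. move=> H; apply: (N_ext N) => i; exact: H. Qed.

Lemma cdot_add g z w : cdot g (cvadd z w) = cdot g z + cdot g w.
Proof. rewrite /cdot -rsum_add; apply: rsum_eq => i; rewrite /term /cvadd /cadd /=; ring. Qed.

Lemma cdot_rscale g t z : cdot g (cvscale (cofR t) z) = t * cdot g z.
Proof. rewrite /cdot -rsum_scale; apply: rsum_eq => i; rewrite /term /cvscale /cmul /cofR /=; ring. Qed.

Lemma CF_convex g : cdominated g -> convex_C (CF g) /\ (forall z, CF g z -> cnorm N z = 1).
Proof.
move=> Hd; split; last by move=> z [].
move=> x y t [hx1 hx2] [hy1 hy2] ht.
have hdot : cdot g (cvadd (cvscale (cofR t) x) (cvscale (cofR (1 - t)) y)) = 1.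
  rewrite cdot_add !cdot_rscale hx2 hy2; ring.
split=> //. apply: Rle_antisym.
  apply: Rle_trans (cnorm_tri _ _) _. rewrite !cnorm_scale !cabs_cofR hx1 hy1 !Rabs_pos_eq; lra.
have := Hd (cvadd (cvscale (cofR t) x) (cvscale (cofR (1 - t)) y)); rewrite hdot; lra.
Qed.

Definition psi (y : 'I_n * bool -> R) : cvec n := fun i => (y (i, true), y (i, false)).
Definition phi (z : cvec n) : 'I_n * bool -> R := fun p => if p.2 then fst (z p.1) else snd (z p.1).

Lemma psi_phi z : psi (phi z) = z.
Proof. apply: cvext => i; rewrite /psi /phi /=. by case: (z i). Qed.

Lemma gdot_psi (a y : 'I_n * bool -> R) :
  gdot a y = cdot (psi a) (psi y).
Proof.
rewrite /gdot /cdot.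
transitivity (\big[Rplus/0]_(p : 'I_n * bool) (fun i b => a (i,b) * y (i,b)) p.1 p.2).
  by apply: eq_bigr => [[i b]] _.
rewrite -(pair_bigA _ (fun i b => a (i, b) * y (i, b))) /=.
apply: eq_bigr => i _. rewrite big_bool /term /psi /=. by [].
Qed.

Lemma complex_face_repr (C : cvec n -> Prop) : convex_C C -> (forall z, C z -> cnorm N z = 1) ->
  exists g, cdominated g /\ forall z, C z -> CF g z.
Proof.
move=> Hc Hs.
pose p := fun y => cnorm N (psi y).
have Hpt : forall x y, p (fun i => x i + y i) <= p x + p y.
  move=> x y. rewrite /p. have -> : psi (fun i => x i + y i) = cvadd (psi x) (psi y).
    apply: cvext => i; by rewrite /psi /cvadd /cadd.
  exact: cnorm_tri.
have Hph : forall t x, p (fun i => t * x i) = Rabs t * p x.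
  move=> t x. rewrite /p. have -> : psi (fun i => t * x i) = cvscale (cofR t) (psi x).
    apply: cvext => i; apply: cpair_eq; rewrite /psi /cvscale /cmul /cofR /=; ring.
  by rewrite cnorm_scale cabs_cofR.
have Hcv : forall x y t, C (psi x) -> C (psi y) -> 0 <= t <= 1 ->
    C (psi (fun i => t * x i + (1 - t) * y i)).
  move=> x y t hx hy ht.
  have -> : psi (fun i => t * x i + (1 - t) * y i) =
      cvadd (cvscale (cofR t) (psi x)) (cvscale (cofR (1 - t)) (psi y)).
    apply: cvext => i; apply: cpair_eq; rewrite /psi /cvadd /cadd /cvscale /cmul /cofR /=; ring.
  exact: Hc.
have [a [Ha1 Ha2]] := face_HB Hpt Hph Hcv (fun y Hy => Hs _ Hy).
exists (psi a); split.
  move=> z. rewrite -{1}(psi_phi z) -gdot_psi. have := Ha1 (phi z). by rewrite /p psi_phi.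
move=> z Hz. split; first exact: Hs.
rewrite -(psi_phi z) -gdot_psi. apply: Ha2. by rewrite psi_phi.
Qed.

Lemma cmax_repr G : max_convex_in_sphere_C (cnorm N) G ->
  exists g, cdominated g /\ forall z, G z <-> CF g z.
Proof.
move=> [Hs [Hc Hm]].
have [g [Hd Hg]] := complex_face_repr Hc Hs.
exists g; split=> // z; split; first exact: Hg.
have [Hc' Hs'] := CF_convex Hd.
exact: Hm (CF g) Hs' Hc' Hg z.
Qed.

Lemma cnorm_clc (l : list (cplx * cvec n)) :
  cnorm N (clincomb l) <= fold_right (fun p s => cabs (fst p) * cnorm N (snd p) + s) 0 l.
Proof.
elim: l => [|p l IH] /=.
  have -> : cnorm N (fun _ => c0) = 0.
    rewrite /cnorm. have -> : (fun i : 'I_n => cabs ((fun _ => c0) i)) = @rvzero n.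
      apply: rvext => i; by rewrite cabs_c0.
    exact: (N_zero HN).
  lra.
apply: Rle_trans (cnorm_tri _ _) _. rewrite cnorm_scale. lra.
Qed.

Lemma caco_ball (F : cvec n -> Prop) x : (forall y, F y -> cnorm N y = 1) -> aco_C F x -> cnorm N x <= 1.
Proof.
move=> HF [l [H1 [H2 H3]]].
have -> : x = clincomb l by apply: cvext.
apply: Rle_trans (cnorm_clc l) _. apply: Rle_trans _ H2.
elim: l H1 {H3} => [|p l IH] H1 /=; first lra.
rewrite HF; last by apply: H1; left.
have := IH (fun q Hq => H1 q (or_intror Hq)). lra.
Qed.

End Cplx.

Section DirB.
Variable n : nat.
Variable N : rvec n -> R.
Hypothesis HN : is_absolute_norm N.

Notation dot := (@dot n).
Notation dominated := (dominated N).
Notation Fa := (Fa N).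
Notation cdot := (@cdot n).
Notation cdominated := (cdominated N).
Notation CF := (CF N).

Lemma max_ext F F' : (forall x, F x <-> F' x) -> max_convex_in_sphere_R N F -> max_convex_in_sphere_R N F'.
Proof.
move=> E [H1 [H2 H3]]. split; first by move=> x /E; apply: H1.
split; first by move=> x y t /E hx /E hy ht; apply/E; apply: H2.
move=> G HG1 HG2 HG3 x Hx. apply/E. apply: (H3 G) => //. move=> y /E; exact: HG3.
Qed.

Lemma cabs_abs_eq z : Rabs (cabs z) = cabs z.
Proof. apply: Rabs_pos_eq; exact: cabs_ge0. Qed.

Lemma dominated_cabs h : cdominated h -> dominated (fun i => cabs (h i)).
Proof.
move=> Hd x.
apply: Rle_trans (dot_abs_ge x (fun i => cabs_ge0 (h i))) _.
pose z := fun i => cmul (ph (h i)) (cofR (Rabs (x i))).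
have E : dot (fun i => cabs (h i)) (rvabs x) = cdot h z.
  rewrite /dot /gdot /cdot; apply: rsum_eq => i. by rewrite /z term_ph /cofR /rvabs.
rewrite E. apply: Rle_trans (Hd z) _. apply: Req_le.
rewrite (N_abs HN x) /cnorm; apply: (N_ext N) => i.
by rewrite /z cabs_mul cabs_ph cabs_cofR /rvabs Rmult_1_l Rabs_Rabsolu.
Qed.

Lemma cdot_embed a z : cdot (embed a) z = dot a (fun i => fst (z i)).
Proof. rewrite /cdot /dot /gdot; apply: rsum_eq => i; rewrite /term /embed /cofR /=; ring. Qed.

Lemma cdot_embed2 a x : cdot (embed a) (embed x) = dot a x.
Proof. rewrite cdot_embed. by []. Qed.

Lemma cdominated_embed a : dominated a -> cdominated (embed a).
Proof. move=> Hd z. rewrite cdot_embed. apply: Rle_trans (Hd _) _. exact: N_Re_le. Qed.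

Lemma CF_embed_term a z : dominated a -> (forall i, 0 <= a i) -> CF (embed a) z ->
  (forall i, a i * fst (z i) = a i * cabs (z i)) /\ dot a (fun i => cabs (z i)) = 1.
Proof.
move=> Hd Hp [h1 h2]. rewrite cdot_embed in h2.
have Hle : forall i, a i * fst (z i) <= a i * cabs (z i).
  move=> i; have := Hp i; have := Re_le_cabs (z i); have := Rle_abs (fst (z i)); nra.
have Hs : dot a (fun i => cabs (z i)) <= 1 by rewrite -h1; exact: Hd.
have Hs2 : 1 <= dot a (fun i => cabs (z i)) by rewrite -h2; exact: rsum_le.
split; last lra.
apply: rsum_le_eq => //. rewrite /dot /gdot in h2 Hs Hs2. lra.
Qed.

Lemma CF_embed_real a z i : dominated a -> (forall i, 0 <= a i) -> CF (embed a) z -> 0 < a i ->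
  z i = cofR (cabs (z i)).
Proof.
move=> Hd Hp Hz Hai. have [Ht _] := CF_embed_term Hd Hp Hz.
have e : fst (z i) = cabs (z i) by apply: (Rmult_eq_reg_l (a i)); [exact: Ht|lra].
have e2 : snd (z i) = 0. apply: cabs_eq_Re. rewrite -e Rabs_pos_eq // e; exact: cabs_ge0.
apply: cpair_eq => //=.
Qed.

Lemma CF_embed_max a : dominated a -> (forall i, 0 <= a i) -> max_convex_in_sphere_R N (Fa a) ->
  max_convex_in_sphere_C (cnorm N) (CF (embed a)).
Proof.
move=> Hd Hp [Fs [Fc Fm]].
have Hcd := cdominated_embed Hd.
have [CFc CFs] := CF_convex HN Hcd.
split; first exact: CFs. split; first exact: CFc.
move=> G' HG1 HG2 HG3.
have [h [Hh HG']] := complex_face_repr HN HG2 HG1.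
pose c := fun i => cabs (h i).
have Hcdom : dominated c := dominated_cabs Hh.
have embF : forall x, Fa a x -> CF (embed a) (embed x).
  move=> x [hx1 hx2]; split; [by rewrite cnorm_embed| by rewrite cdot_embed2].
have T1 : forall x, Fa a x -> forall i, fst (h i) * x i = c i * Rabs (x i).
  move=> x Hx.
  have [_ e] := HG' _ (HG3 _ (embF _ Hx)).
  have e' : \big[Rplus/0]_(i : 'I_n) (fst (h i) * x i) = 1.
    rewrite -e /cdot; apply: rsum_eq => i; rewrite /term /embed /cofR /=; ring.
  have hle : forall i, fst (h i) * x i <= c i * Rabs (x i).
    move=> i. rewrite /c. have := Re_le_cabs (h i). have := Rabs_pos (x i).
    have := Rle_abs (fst (h i) * x i). rewrite Rabs_mult. nra.
  apply: rsum_le_eq => //.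
  have : dot c (rvabs x) <= 1. case: Hx => hx1 _. rewrite -hx1 (N_abs HN x); exact: Hcdom.
  have : 1 <= dot c (rvabs x). rewrite -e'; exact: rsum_le.
  move=> h1 h2. transitivity 1; first exact: e'. apply: Rle_antisym; [exact: h1| exact: h2].
have FaFc : forall x, Fa a x -> Fa c x.
  move=> x Hx. split; first by case: Hx.
  have Ht := T1 x Hx.
  have e : forall i, c i * x i = c i * Rabs (x i).
    move=> i. case: (Rle_dec 0 (x i)) => hxi; first by rewrite Rabs_pos_eq.
    have hai : a i = 0.
      have := Fa_term HN Hd Hp Hx i. have := Hp i. rewrite Rabs_left; [|lra]. nra.
    have Ht' := T1 _ (Fa_flip HN hai Hx) i.
    move: Ht'; rewrite /upd eqxx Rabs_Ropp. move=> Ht'.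
    have := Ht i. have := Rabs_pos (x i). move=> h0 h1.
    have hc0 : c i * Rabs (x i) = 0 by lra.
    rewrite hc0. have : Rabs (x i) <> 0 by split_Rabs; lra.
    move=> hne. have : c i = 0. by case: (Rmult_integral _ _ hc0).
    move=> ->; ring.
  transitivity (\big[Rplus/0]_(i : 'I_n) (fst (h i) * x i)).
    rewrite /dot /gdot; apply: rsum_eq => i; rewrite e Ht //.
  case: (HG' _ (HG3 _ (embF _ Hx))) => _ <-.
  rewrite /cdot; apply: rsum_eq => i; rewrite /term /embed /cofR /=; ring.
have [Fcc Fcs] := Fa_convex HN Hcdom.
have FcFa : forall x, Fa c x -> Fa a x := Fm (Fa c) Fcs Fcc FaFc.
have absG : forall z, G' z -> Fa a (fun i => cabs (z i)).
  move=> z Hz. apply: FcFa. have [hz1 hz2] := HG' _ Hz. split; first by [].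
  apply: Rle_antisym. rewrite -hz1; exact: Hcdom.
  rewrite -hz2 /cdot /dot /gdot; apply: rsum_le => i; exact: term_le.
move=> z Hz.
have Hza := absG z Hz.
have Hez : G' (embed (fun i => cabs (z i))) by apply: HG3; exact: embF.
set m := cvadd (cvscale (cofR (1/2)) z) (cvscale (cofR (1 - 1/2)) (embed (fun i => cabs (z i)))).
have Hm : G' m by apply: HG2 => //; lra.
have Hma := absG m Hm.
have hmle : forall i, a i * cabs (m i) <= a i * cabs (z i).
  move=> i. apply: Rmult_le_compat_l; first exact: Hp.
  rewrite /m /cvadd /cvscale. apply: Rle_trans (cabs_add _ _) _.
  rewrite !cabs_mul !cabs_cofR cabs_abs_eq. rewrite (Rabs_pos_eq (1/2)); [|lra]. rewrite Rabs_pos_eq; lra.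
have hmeq := rsum_le_eq hmle (etrans (proj2 Hma) (esym (proj2 Hza))).
have hre : forall i, a i * fst (z i) = a i * cabs (z i).
  move=> i. case: (Req_dec (a i) 0) => hai; first by rewrite hai; ring.
  f_equal. have := hmeq i. move=> e. have e' : cabs (m i) = cabs (z i).
    apply: (Rmult_eq_reg_l (a i)) => //.
  have : cabs (m i) * cabs (m i) = cabs (z i) * cabs (z i) by rewrite e'.
  rewrite cabs_sq [X in _ = X]cabs_sq /m /cvadd /cvscale /cadd /cmul /embed /cofR /=.
  have hr := cabs_sq (z i). have hr0 := cabs_ge0 (z i). have hre := Re_le_cabs (z i).
  move=> e3.
  have e4 : cabs (z i) * (fst (z i) - cabs (z i)) = 0.
    nra.
  case: (Rmult_integral _ _ e4) => e5; last lra.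
  move: hre; rewrite e5. split_Rabs; lra.
have hc := Hcd z.
have Hzn : cnorm N z = 1 by have := HG1 z Hz.
split=> //. rewrite cdot_embed.
rewrite -(proj2 Hza). apply: rsum_eq => i. exact: hre.
Qed.


Lemma Fa_of_le a y z : dominated a -> CF (embed a) z ->
  (forall i, Rabs (y i) <= cabs (z i)) -> dot a y = 1 -> Fa a y.
Proof.
move=> Hd [hz1 _] Hy Hdot. split=> //. apply: Rle_antisym.
  rewrite -hz1. apply: (N_mono HN) => i. rewrite cabs_abs_eq. exact: Hy.
rewrite -Hdot; exact: Hd.
Qed.

Lemma conv_elem a mu z : dominated a -> (forall i, 0 <= a i) -> CF (embed a) z ->
  exists l, (forall p, In p l -> Fa a (snd p)) /\ (asum l <= cabs mu) /\
    forall i, rlincomb l i = fst (cmul mu (z i)).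
Proof.
move=> Hd Hp Hz.
set r := cabs mu.
pose v := fun i => fst (cmul mu (z i)).
pose p := fun i => if Rlt_dec 0 (a i) then cabs (z i) else v i / r.
pose q := fun i => if Rlt_dec 0 (a i) then cabs (z i) else - v i / r.
pose w1 := (r + fst mu) / 2. pose w2 := - ((r - fst mu) / 2).
have [Ht Hs1] := CF_embed_term Hd Hp Hz.
have hmu := Re_le_cabs mu.
have hr0 : 0 <= r := cabs_ge0 mu.
have hv : forall i, Rabs (v i) <= r * cabs (z i).
  move=> i. rewrite /v -cabs_mul. exact: Re_le_cabs.
have hvr : forall i, Rabs (v i / r) <= cabs (z i).
  move=> i. case: (Req_dec r 0) => hr.
    have := hv i. rewrite hr Rmult_0_l => h. have : v i = 0 by split_Rabs; lra.
    move=> ->. rewrite /Rdiv Rmult_0_l Rabs_R0. exact: cabs_ge0.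
  rewrite /Rdiv Rabs_mult Rabs_inv (Rabs_pos_eq r) //.
  apply/(Rmult_le_reg_r r); [lra|]. rewrite /Rdiv Rmult_assoc Rinv_l // Rmult_1_r.
  have := hv i; lra.
have hdot : forall y : rvec n, (forall i, 0 < a i -> y i = cabs (z i)) -> dot a y = 1.
  move=> y Hy. rewrite -Hs1. apply: rsum_eq => i.
  case: (Rlt_dec 0 (a i)) => hai; first by rewrite Hy.
  have : a i = 0 by have := Hp i; lra. move=> ->; ring.
have Fp : Fa a p.
  apply: Fa_of_le Hz _ _ => //.
    move=> i; rewrite /p; case: Rlt_dec => hai /=; [rewrite cabs_abs_eq; lra| exact: hvr].
  apply: hdot => i hai. rewrite /p; case: Rlt_dec => //.
have Fq : Fa a q.
  apply: Fa_of_le Hz _ _ => //.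
    move=> i; rewrite /q; case: Rlt_dec => hai /=; [rewrite cabs_abs_eq; lra|].
    rewrite /Rdiv -Ropp_mult_distr_l Rabs_Ropp. exact: hvr.
  apply: hdot => i hai. rewrite /q; case: Rlt_dec => //.
exists ((w1, p) :: (w2, q) :: nil). split.
  move=> x [<-|[<-|[]]] //.
split.
  rewrite /asum /= /w1 /w2 /r. move: hmu. split_Rabs; lra.
move=> i. rewrite /= /rvadd /rvscale /rvzero /=. rewrite -/(v i).
rewrite /p /q. case: Rlt_dec => hai /=.
  have Hzi := CF_embed_real Hd Hp Hz hai.
  have e1 : fst (z i) = cabs (z i) by rewrite {1}Hzi. have e2 : snd (z i) = 0 by rewrite Hzi. rewrite e1 e2 /w1 /w2 /r. field.
have hvi : fst mu * fst (z i) - snd mu * snd (z i) = v i by [].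
rewrite hvi.
case: (Req_dec r 0) => hr.
  have hv0 : v i = 0. have := hv i. rewrite hr Rmult_0_l. split_Rabs; lra.
  rewrite hv0 /Rdiv; ring.
rewrite /w1 /w2. field. exact: hr.
Qed.

Lemma conv_list a (lc : list (cplx * cvec n)) : dominated a -> (forall i, 0 <= a i) ->
  (forall p, In p lc -> CF (embed a) (snd p)) ->
  exists l, (forall p, In p l -> Fa a (snd p)) /\ (asum l <= casum lc) /\
    forall i, rlincomb l i = fst (clincomb lc i).
Proof.
move=> Hd Hp. elim: lc => [|[mu z] lc IH] H.
  exists nil; split=> //; split=> //=; lra.
have [l' [H1 [H2 H3]]] := IH (fun p Hp => H p (or_intror Hp)).
have [m [Hm1 [Hm2 Hm3]]] := conv_elem mu Hd Hp (H (mu, z) (or_introl erefl)).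
exists (m ++ l'); split.
  move=> p Hq; case: (in_app_or _ _ _ Hq) => Hq'; [exact: Hm1| exact: H1].
split.
  rewrite asum_app /=. lra.
move=> i. rewrite rlc_app Hm3 H3 /=. by [].
Qed.

Lemma core_B a : dominated a -> (forall i, 0 <= a i) ->
  (forall w, cnorm N w <= 1 -> aco_C (CF (embed a)) w) ->
  forall x, N x <= 1 -> aco_R (Fa a) x.
Proof.
move=> Hd Hp Hc x Hx.
have [lc [H1 [H2 H3]]] := Hc (embed x) ltac:(by rewrite cnorm_embed).
have [l [L1 [L2 L3]]] := conv_list Hd Hp H1.
exists l; split=> //; split.
  change (asum l <= 1). change (casum lc <= 1) in H2. lra.
move=> i. rewrite L3 -H3 /embed /cofR //.
Qed.

Lemma dirB : is_CL_C (cnorm N) -> is_CL_R N.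
Proof.
move=> HC F HF x. split; last first.
  apply: aco_ball => //. by case: HF.
move=> Hx.
have [b [Hb HFb]] := max_repr HN HF.
pose s := fun i => if Rle_dec 0 (b i) then 1 else -1.
have Hs : is_sign s by move=> i; rewrite /s; case: Rle_dec => h /=; [left|right].
pose a := sflip s b.
have Hp : forall i, 0 <= a i.
  move=> i; rewrite /a /sflip /s; case: Rle_dec => h /=; lra.
have Hd : dominated a.
  move=> y. rewrite /a -dot_sflip -(N_sflip HN y Hs). apply: Hb.
have HFa : forall y, Fa a y <-> F (sflip s y).
  move=> y. rewrite (Fa_sflip HN b y Hs). by rewrite HFb.
have Hmax : max_convex_in_sphere_R N (Fa a).
  apply: max_ext (max_sflip HN Hs HF). move=> y; by rewrite HFa.
have HCmax := CF_embed_max Hd Hp Hmax.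
have Hcore := core_B Hd Hp (fun w Hw => proj1 (HC _ HCmax w) Hw).
have := Hcore (sflip s x) ltac:(by rewrite (N_sflip HN x Hs)).
move=> H. have := aco_sflip Hs H. apply: aco_mono => y.
rewrite HFa sflipK //.
Qed.

End DirB.

Section DirA1.
Variable n : nat.
Variable N : rvec n -> R.
Hypothesis HN : is_absolute_norm N.

Notation dot := (@dot n).
Notation dominated := (dominated N).
Notation Fa := (Fa N).
Notation cdot := (@cdot n).
Notation cdominated := (cdominated N).
Notation CF := (CF N).

Lemma cabs_ph_mul_cofR g r : cabs (cmul (ph g) (cofR r)) = Rabs r.
Proof. by rewrite cabs_mul cabs_ph cabs_cofR Rmult_1_l. Qed.

Lemma Fa_max_of_CF g : cdominated g -> max_convex_in_sphere_C (cnorm N) (CF g) ->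
  max_convex_in_sphere_R N (Fa (fun i => cabs (g i))).
Proof.
move=> Hg [Cs [Cc Cm]].
set a := fun i => cabs (g i).
have Hd : dominated a := dominated_cabs HN Hg.
have Hp : forall i, 0 <= a i by move=> i; exact: cabs_ge0.
have [Fc Fs] := Fa_convex HN Hd.
split; first exact: Fs. split; first exact: Fc.
move=> F' H1 H2 H3.
have [b [Hb HF'b]] := real_face_repr HN H2 H1.
set th := fun i => ph (g i).
pose g' := fun i => cmul (th i) (cofR (b i)).
have Hg' : cdominated g'.
  move=> z. pose w := fun i => term (th i) (z i).
  have -> : cdot g' z = dot b w.
    rewrite /cdot /dot /gdot; apply: rsum_eq => i. by rewrite /g' term_scale.
  apply: Rle_trans (Hb w) _. apply: (N_mono HN) => i. rewrite /w cabs_abs_eq.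
  have := term_abs_le (th i) (z i). by rewrite /th cabs_ph Rmult_1_l.
have CFsub : forall z, CF g z -> CF g' z.
  move=> z [hz1 hz2]. split=> //.
  have hle : forall i, term (g i) (z i) <= a i * cabs (z i) by move=> i; exact: term_le.
  have hs : dot a (fun i => cabs (z i)) <= 1 by rewrite -hz1; exact: Hd.
  have hs2 : 1 <= dot a (fun i => cabs (z i)) by rewrite -hz2; exact: rsum_le.
  have heq := rsum_le_eq hle (etrans hz2 (Rle_antisym _ _ hs2 hs)).
  have Hza : Fa a (fun i => cabs (z i)) by split; [by []| lra].
  have Hzb := HF'b _ (H3 _ Hza).
  have hb : forall i, b i * term (th i) (z i) = b i * cabs (z i).
    move=> i. case: (Req_dec (a i) 0) => hai.
      have Hfl := HF'b _ (H3 _ (Fa_flip HN hai Hza)).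
      have : b i * cabs (z i) = 0.
        move: (proj2 Hfl). rewrite dot_upd_x (proj2 Hzb). lra.
      move=> h0. rewrite h0. case: (Rmult_integral _ _ h0) => h1.
        rewrite h1; ring.
      rewrite (cabs0 h1) /term /c0 /=; ring.
    have := term_eq (heq i) hai. move=> ->. rewrite unit_term ?cabs_ph // /cofR /= cabs_ph_mul_cofR cabs_abs_eq //.
  rewrite -(proj2 Hzb). rewrite /cdot /dot /gdot; apply: rsum_eq => i.
  by rewrite /g' term_scale hb.
have [Cc' Cs'] := CF_convex HN Hg'.
have CFsub' : forall z, CF g' z -> CF g z := Cm (CF g') Cs' Cc' CFsub.
move=> x Hx.
have Hxb := HF'b _ Hx.
pose z := fun i => cmul (th i) (cofR (x i)).
have Hzn : cnorm N z = N x.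
  rewrite /cnorm (N_abs HN x); apply: (N_ext N) => i. by rewrite /z /th cabs_ph_mul_cofR.
have Hz' : CF g' z.
  split; first by rewrite Hzn; exact: H1.
  rewrite -(proj2 Hxb) /cdot /dot /gdot; apply: rsum_eq => i.
  by rewrite /g' term_scale /z unit_term /th ?cabs_ph.
have [_ Hz] := CFsub' _ Hz'.
split; first exact: H1.
rewrite -Hz /cdot /dot /gdot; apply: rsum_eq => i.
by rewrite /z /th term_ph.
Qed.

End DirA1.

Lemma sq_list n (f : rvec n -> R) (l : list (R * rvec n)) :
  (forall p, In p l -> Rabs (f (snd p)) <= 1) ->
  fold_right (fun p s => fst p * f (snd p) + s) 0 l = asum l ->
  forall p, In p l -> fst p * f (snd p) = Rabs (fst p).
Proof.
have le1 : forall l' : list (R * rvec n), (forall p, In p l' -> Rabs (f (snd p)) <= 1) ->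
    fold_right (fun p s => fst p * f (snd p) + s) 0 l' <= asum l'.
  elim=> [|p l' IH] H /=; first lra.
  have := IH (fun q Hq => H q (or_intror Hq)).
  have := H p (or_introl erefl). have := Rabs_pos (fst p).
  have := Rle_abs (fst p * f (snd p)). rewrite Rabs_mult. nra.
elim: l => [|p l IH] H Heq q //= Hq.
have Hl := le1 l (fun q Hq => H q (or_intror Hq)).
have Hp : fst p * f (snd p) <= Rabs (fst p).
  have := H p (or_introl erefl). have := Rabs_pos (fst p).
  have := Rle_abs (fst p * f (snd p)). rewrite Rabs_mult. nra.
move: Heq => /= Heq.
case: Hq => [<-|Hq]; first lra.
apply: IH => //. move=> r Hr1; apply: H; by right. lra.
Qed.

Lemma list_nonneg n (f : rvec n -> R) (l : list (R * rvec n)) :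
  (forall p, In p l -> 0 < fst p /\ 0 <= f (snd p)) ->
  0 <= fold_right (fun p s => fst p * f (snd p) + s) 0 l.
Proof.
elim: l => [|r l IH'] H' /=; first lra.
have [r1 r2] := H' r (or_introl erefl). have := IH' (fun s Hs => H' s (or_intror Hs)). nra.
Qed.

Lemma list_pos_zero n (f : rvec n -> R) (l : list (R * rvec n)) :
  (forall p, In p l -> 0 < fst p /\ 0 <= f (snd p)) ->
  fold_right (fun p s => fst p * f (snd p) + s) 0 l = 0 ->
  forall p, In p l -> f (snd p) = 0.
Proof.
elim: l => [|p l IH] H //= Heq q Hq.
have [h1 h2] := H p (or_introl erefl).
have Hr := list_nonneg (fun r Hr0 => H r (or_intror Hr0)).
have h3 : fst p * f (snd p) = 0 by nra.
case: Hq => [<-|Hq].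
  case: (Rmult_integral _ _ h3) => //; lra.
apply: IH => //. move=> r Hr1; apply: H; by right. lra.
Qed.

Lemma rlc_fold n (l : list (R * rvec n)) i :
  rlincomb l i = fold_right (fun p s => fst p * snd p i + s) 0 l.
Proof. elim: l => [|p l IH] //=. rewrite /rvadd /rvscale -/(rlincomb _) IH //. Qed.

Notation Gdot := dot (only parsing).

Section DirA2.
Variable n : nat.
Variable N : rvec n -> R.
Hypothesis HN : is_absolute_norm N.

Notation dot := (@dot n).
Notation dominated := (dominated N).
Notation Fa := (Fa N).

Variable a : rvec n.
Hypothesis Hd : dominated a.
Hypothesis Hp : forall i, 0 <= a i.
Hypothesis Hmax : max_convex_in_sphere_R N (Fa a).
Hypothesis HCL : is_CL_R N.

Definition sgj (j : 'I_n) : rvec n := fun i => if i == j then -1 else 1.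

Lemma sgj_sign j : is_sign (sgj j).
Proof. move=> i; rewrite /sgj; case: (i == j); [right|left]; by []. Qed.

Lemma CL_j j x : N x <= 1 -> aco_R (Fa (sflip (sgj j) a)) x.
Proof.
move=> Hx.
have Hm : max_convex_in_sphere_R N (Fa (sflip (sgj j) a)).
  apply: (max_ext (F := fun y => Fa a (sflip (sgj j) y))).
    move=> y. by rewrite (Fa_sflip HN a y (sgj_sign j)).
  have H := max_sflip HN (sgj_sign j) Hmax. exact H.
exact (proj1 (HCL Hm x) Hx).
Qed.

Lemma Fa_nonneg x : Fa a x -> forall i, 0 <= a i * x i.
Proof.
move=> Hx i. rewrite (Fa_term HN Hd Hp Hx i). have := Hp i; have := Rabs_pos (x i); nra.
Qed.

Definition Qj (j : 'I_n) (p : R * rvec n) :=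
  0 < fst p /\ Fa a (snd p) /\ (a j * snd p j = 0 \/ forall i, i <> j -> a i * snd p i = 0).

Lemma lemmaL x j : Fa a x -> exists l, (forall p, In p l -> Qj j p) /\ asum l <= 1 /\
  forall i, x i = rlincomb l i.
Proof.
move=> Hx.
have [l0 [H1 [H2 H3]]] := CL_j j (Req_le _ _ (proj1 Hx)).
change (asum l0 <= 1) in H2.
set aj := sflip (sgj j) a in H1.
have Haj : forall y, dot a y = dot aj y + 2 * a j * y j.
  move=> y. have -> : a = upd aj j (a j).
    apply: rvext => i; rewrite /upd /aj /sflip /sgj. case E: (i == j) => //; last ring.
    by move/eqP: E => ->.
  rewrite dot_upd_a /aj /sflip /sgj eqxx /=. rewrite /upd eqxx. ring.
have Hc : forall p, In p l0 -> Rabs (dot a (snd p)) <= 1.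
  move=> p Hp0. have [hy1 _] := H1 p Hp0.
  have h1 := Hd (snd p). have h2 := Hd (fun i => - snd p i).
  rewrite (N_opp HN) hy1 in h2. rewrite hy1 in h1.
  have : dot a (fun i => - snd p i) = - dot a (snd p).
    have -> : (fun i => - snd p i) = (fun i => -1 * snd p i) by apply: rvext => i; ring.
    rewrite /Gdot gdot_scale; ring.
  move=> e; rewrite e in h2. split_Rabs; lra.
have Hsum : fold_right (fun p s => fst p * dot a (snd p) + s) 0 l0 = asum l0.
  have : dot a x = fold_right (fun p s => fst p * dot a (snd p) + s) 0 l0.
    rewrite -dot_rlc. f_equal. by apply: rvext.
  rewrite (proj2 Hx). move=> e.
  have := sq_list Hc. move=> _.
  apply: Rle_antisym; last by rewrite -e.
  clear -Hc. elim: l0 Hc => [|p l IH] Hc /=; first lra.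
  have := IH (fun q Hq => Hc q (or_intror Hq)).
  have := Hc p (or_introl erefl). have := Rabs_pos (fst p).
  have := Rle_abs (fst p * dot a (snd p)). rewrite Rabs_mult. nra.
have Heq := sq_list Hc Hsum.
have : exists l, (forall p, In p l -> Qj j p) /\ asum l <= asum l0 /\
    forall i, rlincomb l0 i = rlincomb l i.
  elim: l0 H1 {H2 H3 Hsum} Hc Heq => [|[lam y] l0 IH] H1 Hc Heq.
    exists nil; split=> //; split=> //=; lra.
  have [l [L1 [L2 L3]]] := IH (fun q Hq => H1 q (or_intror Hq)) (fun q Hq => Hc q (or_intror Hq))
     (fun q Hq => Heq q (or_intror Hq)).
  have Hy := H1 (lam, y) (or_introl erefl).
  have He := Heq (lam, y) (or_introl erefl). simpl in Hy, He.
  case: Hy => hy1 hy2.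
  case: (Rtotal_order lam 0) => [hl|[hl|hl]].
  -
    rewrite Rabs_left // in He.
    have hc : dot a y = -1 by apply: (Rmult_eq_reg_l lam); [lra|lra].
    pose u := fun i => - y i.
    have Hu : Fa a u.
      split; first by rewrite /u (N_opp HN).
      have -> : u = (fun i => -1 * y i) by apply: rvext => i; rewrite /u; ring.
      rewrite /Gdot gdot_scale -/(Gdot a y) hc. ring.
    have haj : a j * u j = 1.
      have := Haj y. rewrite hc hy2 /u. lra.
    exists ((- lam, u) :: l); split.
      move=> p [<-|Hq]; last exact: L1.
      split; [simpl; lra|split; first exact: Hu]. right => i hij.
      pose Gf := fun k => if k == j then a j * u j else 0.
      have hle : forall k, Gf k <= a k * u k.
        move=> k; rewrite /Gf; case E: (k == j); first by move/eqP: E => ->; lra.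
        exact: Fa_nonneg Hu k.
      have hsum : \big[Rplus/0]_(k : 'I_n) Gf k = \big[Rplus/0]_(k : 'I_n) (a k * u k).
        rewrite (@rsum_single _ j); first by rewrite /Gf eqxx haj -(proj2 Hu).
        by move=> k /negbTE hk; rewrite /Gf hk.
      have := rsum_le_eq hle hsum i. rewrite /Gf.
      have -> : (i == j) = false by apply/eqP.
      move=> <- //.
    split.
      rewrite /= Rabs_Ropp Rabs_left //. simpl in L2. lra.
    move=> i. rewrite /= /rvadd /rvscale -/(rlincomb l0) -/(rlincomb l) L3 /u /=. ring.
  - exists l; split=> //; split.
      rewrite /= hl Rabs_R0. lra.
    move=> i. rewrite /= /rvadd /rvscale -/(rlincomb l0) L3 hl /=. ring.
  - rewrite Rabs_pos_eq in He; last lra.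
    have hc : dot a y = 1 by apply: (Rmult_eq_reg_l lam); [lra|lra].
    exists ((lam, y) :: l); split.
      move=> p [<-|Hq]; last exact: L1.
      split; [simpl; lra|split; first by split]. left.
      have := Haj y. rewrite hc hy2 /=. lra.
    split.
      rewrite /= Rabs_pos_eq; [|lra]. simpl in L2. lra.
    move=> i. rewrite /= /rvadd /rvscale -/(rlincomb l0) -/(rlincomb l) L3 //.
move=> [l [L1 [L2 L3]]].
exists l; split=> //; split; [lra| move=> i; rewrite H3 L3 //].
Qed.

Definition good (L : list 'I_n) (t : rvec n) :=
  Fa a t /\ forall i k, In i L -> In k L -> i <> k -> a i * t i = 0 \/ a k * t k = 0.

Lemma good_step L j y : good L y -> aco_R (good (j :: L)) y.
Proof.
move=> [Hy Hg].
have [l [L1 [L2 L3]]] := lemmaL j Hy.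
have transfer : forall m, a m * y m = 0 -> forall p, In p l -> a m * snd p m = 0.
  move=> m hm. apply: (list_pos_zero (f := fun t => a m * t m)).
    move=> p Hp0. have [h1 [h2 _]] := L1 p Hp0. split=> //. exact: Fa_nonneg h2 m.
  transitivity (a m * y m); last exact: hm. rewrite L3 rlc_fold. clear. elim: l => [|p l IH] /=; first ring. rewrite Rmult_plus_distr_l -IH. congr (_ + _). rewrite /rvec. ring.
exists l; split; last by split.
move=> p Hp0. have [h1 [h2 h3]] := L1 p Hp0. split=> // i k Hi Hk hik.
case: (classic (i = j)) => hij.
  subst i. have Hk' : In k L by case: Hk => // e; exfalso; apply: hik.
  case: h3 => h3; [by left| right; apply: h3; move=> e; apply: hik].
  by [].
case: (classic (k = j)) => hkj.
  subst k. have Hi' : In i L by case: Hi => // e; exfalso; apply: hij.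
  case: h3 => h3; [by right| left; exact: h3].
have Hi' : In i L by case: Hi => // e; exfalso; apply: hij.
have Hk' : In k L by case: Hk => // e; exfalso; apply: hkj.
case: (Hg i k Hi' Hk' hik) => hz; [left|right]; exact: transfer hz p Hp0.
Qed.

Definition Tset (t : rvec n) := Fa a t /\ forall i k, i <> k -> a i * t i = 0 \/ a k * t k = 0.

Lemma decomp x : Fa a x -> aco_R Tset x.
Proof.
move=> Hx.
have : forall L, aco_R (good L) x.
  elim=> [|j L IH].
    apply: aco_self. split=> // i k [].
  apply: aco_trans. apply: aco_mono IH => y Hy. exact: good_step.
move=> /(_ (enum 'I_n)) H. apply: aco_mono H => t [Ht Hg].
split=> // i k hik. apply: Hg => //; apply: In_mem; by rewrite mem_enum.
Qed.

Lemma ball_T x : N x <= 1 -> aco_R Tset x.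
Proof.
move=> Hx. apply: aco_trans. apply: (aco_mono (P := Fa a)) => [y Hy|]; [exact: decomp| exact (proj1 (HCL Hmax x) Hx)].
Qed.

End DirA2.

Lemma caco_mono n (P Q : cvec n -> Prop) x : (forall y, P y -> Q y) -> aco_C P x -> aco_C Q x.
Proof.
move=> H [l [H1 [H2 H3]]]. exists l; split=> //. move=> p Hp; apply: H; exact: H1.
Qed.

Lemma cmax_ext n (NC : cvec n -> R) F F' : (forall x, F x <-> F' x) ->
  max_convex_in_sphere_C NC F -> max_convex_in_sphere_C NC F'.
Proof.
move=> E [H1 [H2 H3]]. split; first by move=> x /E; apply: H1.
split; first by move=> x y t /E hx /E hy ht; apply/E; apply: H2.
move=> G HG1 HG2 HG3 x Hx. apply/E. apply: (H3 G) => //. move=> y /E; exact: HG3.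
Qed.



Section DirA3.
Variable n : nat.
Variable N : rvec n -> R.
Hypothesis HN : is_absolute_norm N.

Notation dot := (@dot n).
Notation dominated := (dominated N).
Notation Fa := (Fa N).
Notation cdot := (@cdot n).
Notation cdominated := (cdominated N).
Notation CF := (CF N).

Variable g : cvec n.
Hypothesis Hg : cdominated g.
Definition aa : rvec n := fun i => cabs (g i).

Lemma term_zero_r u v : term u (cmul v (cofR 0)) = 0.
Proof. rewrite /term /cmul /cofR /=; ring. Qed.

Lemma conv_elemA (phi : cvec n) c t : (forall i, cabs (phi i) = 1) -> Tset N aa t ->
  exists mu z, CF g z /\ cabs mu = Rabs c /\
    forall i, cmul mu (z i) = cmul (phi i) (cofR (c * t i)).
Proof.
move=> Hphi [Ht Hpair].
have [s Hs] : exists s, aa s * t s <> 0.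
  apply: NNPP => hne. apply: R1_neq_R0. rewrite -(proj2 Ht).
  rewrite /Gdot /gdot; apply: rsum0 => i. apply: NNPP => h; apply: hne; by exists i.
have Hoth : forall i, i <> s -> aa i * t i = 0.
  move=> i his. by case: (Hpair i s his).
set th := ph (g s).
set psi := cmul (cconj (phi s)) th.
have Hpsi : cabs psi = 1 by rewrite /psi cabs_mul cabs_conj Hphi /th cabs_ph; ring.
pose mu := cmul (cofR c) (cconj psi).
pose z := fun i => cmul (cmul (phi i) psi) (cofR (t i)).
exists mu, z. split; last split.
- split.
    rewrite -(proj1 Ht) (N_abs HN t) /cnorm; apply: (N_ext N) => i.
    by rewrite /z cabs_mul cabs_mul Hphi Hpsi cabs_cofR /rvabs; ring.
  have Hzs : z s = cmul th (cofR (t s)).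
    rewrite /z /psi. have -> : cmul (phi s) (cmul (cconj (phi s)) th) = cmul (cmul (cconj (phi s)) (phi s)) th.
      apply: cpair_eq; rewrite /cmul /cconj /=; ring.
    by rewrite cconj_unit // cmul1.
  rewrite /cdot (@rsum_single _ s).
    rewrite Hzs /th term_ph /cofR /= -(proj2 Ht) /Gdot /gdot (@rsum_single _ s) //.
    by move=> i /eqP his; apply: Hoth.
  move=> i /eqP his. have := Hoth i his. rewrite /aa. move=> h.
  case: (Rmult_integral _ _ h) => h0.
    by rewrite (cabs0 h0) /term /c0 /=; ring.
  by rewrite /z h0 term_zero_r.
- by rewrite /mu cabs_mul cabs_conj Hpsi cabs_cofR Rmult_1_r.
- move=> i. rewrite /mu /z.
  rewrite -[RHS]cmul1 -(cconj_unit Hpsi).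
  apply: cpair_eq; rewrite /cmul /cconj /cofR /=; ring.
Qed.

Lemma conv_listA (phi : cvec n) (l : list (R * rvec n)) : (forall i, cabs (phi i) = 1) ->
  (forall p, In p l -> Tset N aa (snd p)) ->
  exists lc, (forall p, In p lc -> CF g (snd p)) /\ (casum lc <= asum l) /\
    forall i, clincomb lc i = cmul (phi i) (cofR (rlincomb l i)).
Proof.
move=> Hphi. elim: l => [|[c t] l IH] H.
  exists nil; split=> //; split; first by rewrite /=; lra.
  move=> i; apply: cpair_eq; rewrite /= /cmul /cofR /c0 /rvzero /=; ring.
have [lc [H1 [H2 H3]]] := IH (fun p Hp => H p (or_intror Hp)).
have [mu [z [Hz [Hmu Hmz]]]] := conv_elemA c Hphi (H (c, t) (or_introl erefl)).
exists ((mu, z) :: lc); split.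
  move=> p [<-|Hp]; [exact: Hz| exact: H1].
split; first by rewrite /= Hmu; lra.
move=> i. rewrite clc_cons /= Hmz H3 /rvadd /rvscale /=.
apply: cpair_eq; rewrite /cadd /cmul /cofR /=; ring.
Qed.

Hypothesis Hmax : max_convex_in_sphere_R N (Fa aa).
Hypothesis HCL : is_CL_R N.

Lemma core_A w : cnorm N w <= 1 -> aco_C (CF g) w.
Proof.
move=> Hw.
have Hd : dominated aa := dominated_cabs HN Hg.
have Hp : forall i, 0 <= aa i by move=> i; exact: cabs_ge0.
have [l [L1 [L2 L3]]] := ball_T HN Hd Hp Hmax HCL Hw.
change (asum l <= 1) in L2.
have Hphi : forall i, cabs (ph (w i)) = 1 by move=> i; exact: cabs_ph.
have [lc [C1 [C2 C3]]] := conv_listA Hphi L1.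
exists lc; split=> //; split.
  change (casum lc <= 1). lra.
move=> i. rewrite C3 -L3. exact: ph_decomp.
Qed.

End DirA3.

Lemma dirA n (N : rvec n -> R) (HN : is_absolute_norm N) : is_CL_R N -> is_CL_C (cnorm N).
Proof.
move=> HR G HG z. split; last first.
  apply: caco_ball => //. by case: HG.
move=> Hz.
have [g [Hg HGg]] := cmax_repr HN HG.
have HCF : max_convex_in_sphere_C (cnorm N) (CF N g) by apply: cmax_ext HG.
have Hmax := Fa_max_of_CF HN Hg HCF.
have := core_A HN Hg Hmax HR Hz.
apply: caco_mono => y. by rewrite HGg.
Qed.

Theorem proposition4p3 (n : nat) (N : rvec n -> R) (HN : is_absolute_norm N) :
  (forall x : rvec n, is_extreme_R N x <-> is_extreme_C (cnorm N) (embed x)) /\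
  (is_CL_R N <-> is_CL_C (cnorm N)).
Proof.
split; first by move=> x; exact: part1.
split; [exact: dirA| exact: dirB].
Qed.
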